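(* For complex parameters $a,b,c,d$ such that the series on the left converges and all terms are defined, $${}_3F_2\!\left[\begin{matrix}a,\ b,\ d+2\\ c+1,\ d\end{matrix};1\right]=\frac{\Gamma(c+1)\Gamma(c-a-b)}{\Gamma(c-a+1)\Gamma(c-b+1)}\left\{(c-a-b)+\frac{2ab}{d}+\frac{ab(a+1)(b+1)}{d(d+1)(c-a-b-1)}\right\}.$$
   Context: $(a)_k=a(a+1)\cdots(a+k-1)$ is the Pochhammer symbol and ${}_3F_2\!\left[\begin{matrix}a_1,a_2,a_3\\ b_1,b_2\end{matrix};z\right]=\sum_{k\ge0}\frac{(a_1)_k(a_2)_k(a_3)_k}{(b_1)_k(b_2)_k}\frac{z^k}{k!}$. *)

(* Defs.v *)
From Stdlib Require Import Reals Arith.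
From Coquelicot Require Import Coquelicot.
Open Scope C_scope.

Fixpoint poch (a : C) (k : nat) : C :=
  match k with
  | O => 1
  | S k' => poch a k' * (a + RtoC (INR k'))
  end.

Definition F32_term (a1 a2 a3 b1 b2 z : C) (k : nat) : C :=
  (poch a1 k * poch a2 k * poch a3 k) / (poch b1 k * poch b2 k)
  * (Cpow z k / RtoC (INR (fact k))).

(* Complex power x^z = exp(z ln x) for a real x > 0. *)
Definition Rcpow (x : R) (z : C) : C :=
  ((exp (Re z * ln x) * cos (Im z * ln x))%R, (exp (Re z * ln x) * sin (Im z * ln x))%R).

(* Gauss's product formula: Gamma(z) = lim_n n! n^z / (z (z+1) ... (z+n)). *)
Definition gauss_seq (z : C) (n : nat) : C :=
  RtoC (INR (fact n)) * Rcpow (INR n) z / poch z (S n).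

(* The (complex) Gamma function, defined as the limit of gauss_seq
   (componentwise limit; meaningful away from the poles 0, -1, -2, ...). *)
Definition CGamma (z : C) : C :=
  (real (Lim_seq (fun n => Re (gauss_seq z n))),
   real (Lim_seq (fun n => Im (gauss_seq z n)))).

Definition nonpos_int (z : C) : Prop := exists n : nat, z = RtoC (- INR n).

(* Main.v *)
Require Import Defs.
From Stdlib Require Import Reals Lra Lia ZArith.
From Coquelicot Require Import Coquelicot.
Open Scope C_scope.

Definition cvC (u : nat -> C) (L : C) :=
  forall eps : R, (0 < eps)%R -> exists N : nat, forall n, (N <= n)%nat -> (Cmod (u n - L) < eps)%R.

Lemma Cmod_sub_sym (x y : C) : Cmod (x - y) = Cmod (y - x).
Proof. replace (x - y) with (- (y - x)) by ring. apply Cmod_opp. Qed.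

Lemma Cmod_tri3 (x y z : C) : (Cmod (x - z) <= Cmod (x - y) + Cmod (y - z))%R.
Proof. replace (x - z) with ((x - y) + (y - z)) by ring. apply Cmod_triangle. Qed.

Lemma cvC_const (L : C) : cvC (fun _ => L) L.
Proof. intros e He; exists 0%nat; intros n _. replace (L - L) with (RtoC 0) by ring.
  rewrite Cmod_0; lra. Qed.

Lemma cvC_ext_ev (u v : nat -> C) (L : C) (N0 : nat) :
  (forall n, (N0 <= n)%nat -> u n = v n) -> cvC u L -> cvC v L.
Proof. intros H Hu e He. destruct (Hu e He) as [N HN]. exists (max N N0).
  intros n Hn. rewrite <- H by lia. apply HN; lia. Qed.

Lemma cvC_ext (u v : nat -> C) (L : C) :
  (forall n, u n = v n) -> cvC u L -> cvC v L.
Proof. intros H. apply (cvC_ext_ev u v L 0). intros; auto. Qed.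

Lemma cvC_plus (u v : nat -> C) (L M : C) : cvC u L -> cvC v M -> cvC (fun n => u n + v n) (L + M).
Proof. intros Hu Hv e He. destruct (Hu (e/2)%R) as [N1 H1]; [lra|].
  destruct (Hv (e/2)%R) as [N2 H2]; [lra|]. exists (max N1 N2). intros n Hn.
  replace (u n + v n - (L + M)) with ((u n - L) + (v n - M)) by ring.
  eapply Rle_lt_trans; [apply Cmod_triangle|].
  specialize (H1 n ltac:(lia)); specialize (H2 n ltac:(lia)); lra. Qed.

Lemma cvC_opp (u : nat -> C) (L : C) : cvC u L -> cvC (fun n => - u n) (- L).
Proof. intros Hu e He. destruct (Hu e He) as [N H]. exists N. intros n Hn.
  replace (- u n - - L) with (- (u n - L)) by ring. rewrite Cmod_opp. auto. Qed.

Lemma cvC_minus (u v : nat -> C) (L M : C) : cvC u L -> cvC v M -> cvC (fun n => u n - v n) (L - M).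
Proof. intros. apply (cvC_plus u (fun n => - v n)); auto. apply cvC_opp; auto. Qed.

Lemma cvC_bounded (u : nat -> C) (L : C) : cvC u L ->
  exists N, forall n, (N <= n)%nat -> (Cmod (u n) <= Cmod L + 1)%R.
Proof. intros Hu. destruct (Hu 1%R) as [N HN]; [lra|]. exists N. intros n Hn.
  replace (u n) with ((u n - L) + L) by ring.
  eapply Rle_trans; [apply Cmod_triangle|]. specialize (HN n Hn). lra. Qed.

Lemma cvC_zero_mult_bounded (u v : nat -> C) (M : R) (N0 : nat) :
  cvC u 0 -> (forall n, (N0 <= n)%nat -> (Cmod (v n) <= M)%R) -> cvC (fun n => u n * v n) 0.
Proof. intros Hu Hv e He.
  assert (HM : (0 < Rabs M + 1)%R) by (pose proof (Rabs_pos M); lra).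
  destruct (Hu (e / (Rabs M + 1))%R) as [N HN]. { apply Rdiv_lt_0_compat; lra. }
  exists (max N N0). intros n Hn. replace (u n * v n - 0) with ((u n - 0) * v n) by ring.
  rewrite Cmod_mult. specialize (HN n ltac:(lia)). specialize (Hv n ltac:(lia)).
  pose proof (Cmod_ge_0 (u n - 0)). pose proof (Cmod_ge_0 (v n)).
  pose proof (Rle_abs M).
  apply Rle_lt_trans with (Cmod (u n - 0) * (Rabs M + 1))%R.
  { apply Rmult_le_compat_l; lra. }
  apply Rmult_lt_reg_r with (/ (Rabs M + 1))%R. { apply Rinv_0_lt_compat; lra. }
  rewrite Rmult_assoc, Rinv_r by lra. rewrite Rmult_1_r. exact HN. Qed.

Lemma cvC_to0 (u : nat -> C) (L : C) : cvC u L -> cvC (fun n => u n - L) 0.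
Proof. intros Hu e He. destruct (Hu e He) as [N HN]. exists N. intros n Hn.
  replace (u n - L - 0) with (u n - L) by ring. auto. Qed.

Lemma cvC_from0 (u : nat -> C) (L : C) : cvC (fun n => u n - L) 0 -> cvC u L.
Proof. intros Hu e He. destruct (Hu e He) as [N HN]. exists N. intros n Hn.
  specialize (HN n Hn). replace (u n - L - 0) with (u n - L) in HN by ring. auto. Qed.

Lemma cvC_mult (u v : nat -> C) (L M : C) : cvC u L -> cvC v M -> cvC (fun n => u n * v n) (L * M).
Proof. intros Hu Hv. apply cvC_from0.
  destruct (cvC_bounded v M Hv) as [N HN].
  apply cvC_ext with (fun n => ((u n - L) * v n) + (L * (v n - M))).
  { intros; ring. }
  replace (RtoC 0) with (RtoC 0 + RtoC 0) by ring.
  apply cvC_plus.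
  - apply (cvC_zero_mult_bounded _ _ (Cmod M + 1) N); auto. apply cvC_to0; auto.
  - apply cvC_ext with (fun n => (v n - M) * L). { intros; ring. }
    apply (cvC_zero_mult_bounded _ _ (Cmod L) 0); [apply cvC_to0; auto|]. intros; lra. Qed.

Lemma cvC_inv (u : nat -> C) (L : C) : L <> 0 -> cvC u L -> cvC (fun n => / u n) (/ L).
Proof. intros HL Hu. apply Cmod_gt_0 in HL as HL'.
  destruct (Hu (Cmod L / 2)%R) as [N1 H1]; [lra|].
  apply cvC_from0.
  apply (cvC_ext_ev (fun n => (u n - L) * (- / (u n * L))) _ _ N1).
  { intros n Hn. specialize (H1 n Hn).
    assert (u n <> 0).
    { intro E. rewrite E in H1. replace (0 - L) with (- L) in H1 by ring. rewrite Cmod_opp in H1. lra. }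
    field. auto. }
  apply (cvC_zero_mult_bounded _ _ (2 / (Cmod L * Cmod L))%R N1).
  - apply cvC_to0; auto.
  - intros n Hn. specialize (H1 n Hn).
    assert (Hun : (Cmod L / 2 <= Cmod (u n))%R).
    { pose proof (Cmod_tri3 L (u n) 0). rewrite Cmod_sub_sym in H1.
      replace (L - 0) with L in H by ring. replace (u n - 0) with (u n) in H by ring. lra. }
    assert (u n <> 0). { intro E; rewrite E, Cmod_0 in Hun; lra. }
    rewrite Cmod_opp, Cmod_inv, Cmod_mult.
    2:{ intro E. apply (f_equal Cmod) in E. rewrite Cmod_mult, Cmod_0 in E.
        apply Rmult_integral in E. destruct E as [E|E]; apply Cmod_eq_0 in E; auto. }
    apply Rle_trans with (/ (Cmod L / 2 * Cmod L))%R.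
    + apply Rinv_le_contravar. { apply Rmult_lt_0_compat; lra. }
      apply Rmult_le_compat_r; lra.
    + right. field. lra.
Qed.

Lemma cvC_unique (u : nat -> C) (L M : C) : cvC u L -> cvC u M -> L = M.
Proof. intros HL HM. destruct (Req_dec (Cmod (L - M)) 0) as [E|E].
  - apply Cmod_eq_0 in E. replace L with ((L - M) + M) by ring. rewrite E. ring.
  - pose proof (Cmod_ge_0 (L - M)).
    destruct (HL (Cmod (L - M) / 2)%R) as [N1 H1]; [lra|].
    destruct (HM (Cmod (L - M) / 2)%R) as [N2 H2]; [lra|].
    specialize (H1 (max N1 N2) ltac:(lia)). specialize (H2 (max N1 N2) ltac:(lia)).
    pose proof (Cmod_tri3 L (u (max N1 N2)) M). rewrite Cmod_sub_sym in H1. lra. Qed.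

Lemma cvC_shift (u : nat -> C) (L : C) : cvC (fun n => u (S n)) L -> cvC u L.
Proof. intros H e He. destruct (H e He) as [N HN]. exists (S N). intros n Hn.
  destruct n; [lia|]. apply HN; lia. Qed.

Lemma cvC_shift' (u : nat -> C) (L : C) : cvC u L -> cvC (fun n => u (S n)) L.
Proof. intros H e He. destruct (H e He) as [N HN]. exists N. intros n Hn. apply HN; lia. Qed.

Lemma cvC_squeeze (u v : nat -> C) (L : C) (N0 : nat) :
  cvC u 0 -> (forall n, (N0 <= n)%nat -> (Cmod (v n - L) <= Cmod (u n))%R) -> cvC v L.
Proof. intros Hu Hle e He. destruct (Hu e He) as [N HN]. exists (max N N0). intros n Hn.
  eapply Rle_lt_trans; [apply Hle; lia|]. specialize (HN n ltac:(lia)).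
  replace (u n - 0) with (u n) in HN by ring. auto. Qed.

Lemma cvC_inv_n : cvC (fun n => / RtoC (INR n)) 0.
Proof. intros e He. destruct (archimed (/ e)) as [H1 _].
  assert (Hpos : (0 < IZR (up (/ e)))%R). { pose proof (Rinv_0_lt_compat e He). lra. }
  exists (Z.to_nat (up (/ e))). intros n Hn.
  assert (Hn' : (IZR (up (/ e)) <= INR n)%R).
  { assert (Hz : (0 <= up (/ e))%Z) by (apply le_IZR; lra).
    rewrite <- (Z2Nat.id (up (/ e))) by exact Hz. rewrite <- INR_IZR_INZ. apply le_INR; auto. }
  assert (0 < INR n)%R by lra.
  replace (/ RtoC (INR n) - 0) with (RtoC (/ INR n)).
  2:{ rewrite RtoC_inv by lra. ring. }
  rewrite Cmod_R, Rabs_pos_eq by (left; apply Rinv_0_lt_compat; lra).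
  rewrite <- (Rinv_inv e). apply Rinv_lt_contravar.
  - apply Rmult_lt_0_compat; [apply Rinv_0_lt_compat|]; lra.
  - lra. Qed.

Lemma cvC_Re (u : nat -> C) (L : C) : cvC u L -> is_lim_seq (fun n => Re (u n)) (Re L).
Proof. intros H. apply is_lim_seq_spec. intros eps. destruct (H eps (cond_pos eps)) as [N HN].
  exists N. intros n Hn. eapply Rle_lt_trans; [|apply (HN n Hn)].
  eapply Rle_trans; [|apply re_le_Cmod]. right. reflexivity. Qed.

Lemma cvC_Im (u : nat -> C) (L : C) : cvC u L -> is_lim_seq (fun n => Im (u n)) (Im L).
Proof. intros H. apply is_lim_seq_spec. intros eps. destruct (H eps (cond_pos eps)) as [N HN].
  exists N. intros n Hn. eapply Rle_lt_trans; [|apply (HN n Hn)].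
  eapply Rle_trans; [|apply Rmax_Cmod]. apply Rmax_r. Qed.

Lemma CGamma_of (z L : C) : cvC (gauss_seq z) L -> CGamma z = L.
Proof. intros H. unfold CGamma.
  rewrite (is_lim_seq_unique _ _ (cvC_Re _ _ H)), (is_lim_seq_unique _ _ (cvC_Im _ _ H)).
  simpl. destruct L; reflexivity. Qed.

Lemma is_series_of_cvC (a : nat -> C) (L : C) : cvC (sum_n a) L -> is_series a L.
Proof. intros H. unfold is_series. intros P [eps HP].
  destruct (H eps (cond_pos eps)) as [N HN]. exists N. intros n Hn.
  apply HP. apply C_NormedModule_mixin_compat1. apply HN. lia. Qed.

Lemma cvC_of_is_series (a : nat -> C) (L : C) : is_series a L -> cvC (sum_n a) L.
Proof. intros H e He.
  assert (He' : (0 < e / sqrt 2)%R). { apply Rdiv_lt_0_compat; auto. apply sqrt_lt_R0; lra. }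
  destruct (H (ball L (mkposreal _ He'))) as [N HN].
  { exists (mkposreal _ He'). auto. }
  exists N. intros n Hn. specialize (HN n Hn).
  apply C_NormedModule_mixin_compat2 in HN. simpl in HN.
  replace (e) with (sqrt 2 * (e / sqrt 2))%R. 2:{ field. apply Rgt_not_eq. apply sqrt_lt_R0; lra. }
  exact HN. Qed.


Lemma cos_lb2 (y : R) : (- 2 <= y <= 2)%R -> (1 - y * y / 2 <= cos y)%R.
Proof. intros [H1 H2]. destruct (pre_cos_bound y 0 H1 H2) as [H _].
  unfold cos_approx, cos_term in H. simpl in H. eapply Rle_trans; [|exact H]. right. field. Qed.

Lemma sin_bnds_pos (y : R) : (0 <= y <= 4)%R ->
  (y - y * y * y / 6 <= sin y <= y - y * y * y / 6 + y * y * y * y * y / 120)%R.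
Proof. intros [H1 H2]. destruct (pre_sin_bound y 0 H1 H2) as [Ha Hb].
  unfold sin_approx, sin_term in Ha, Hb. simpl in Ha, Hb. split.
  - eapply Rle_trans; [|exact Ha]. right. field.
  - eapply Rle_trans; [exact Hb|]. right. field. Qed.

Lemma sin_small (y : R) : (Rabs y <= 1/2)%R ->
  (Rabs (sin y) <= Rabs y /\ Rabs (sin y - y) <= y * y)%R.
Proof. intros H. destruct (Rle_or_lt 0 y) as [Hy|Hy].
  - rewrite Rabs_pos_eq in H by lra. destruct (sin_bnds_pos y) as [A B]; [lra|].
    rewrite (Rabs_pos_eq y) by lra.
    assert (0 <= y * y * y)%R by (apply Rmult_le_pos; [apply Rmult_le_pos|]; lra).
    assert (y * y * y * y * y / 120 <= y * y * y / 6)%R.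
    { assert (y * y <= 1)%R by nra. nra. }
    assert (0 <= sin y)%R by nra.
    split; [rewrite Rabs_pos_eq; lra|]. rewrite Rabs_left1 by lra.
    assert (y * y * y <= y * y)%R by nra. lra.
  - rewrite Rabs_left in H by lra. destruct (sin_bnds_pos (- y)) as [A B]; [lra|].
    rewrite sin_neg in A, B. rewrite (Rabs_left y) by lra.
    set (z := (- y)%R) in *.
    assert (Ey : y = (- z)%R) by (unfold z; ring).
    assert (0 <= z * z * z)%R by (apply Rmult_le_pos; [apply Rmult_le_pos|]; lra).
    assert (z * z * z * z * z / 120 <= z * z * z / 6)%R.
    { assert (z * z <= 1)%R by nra. nra. }
    assert (sin y <= 0)%R by nra.
    split; [rewrite Rabs_left1; lra|]. rewrite Rabs_pos_eq by lra.
    assert (z * z * z <= z * z)%R by nra. assert (y * y = z * z)%R by (rewrite Ey; ring). lra. Qed.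

Lemma exp_small (x : R) : (Rabs x <= 1/2)%R -> (x <= exp x - 1 <= x + 2 * x * x)%R.
Proof. intros H. pose proof (exp_ineq1_le x). pose proof (exp_ineq1_le (- x)).
  assert (E : (exp x * exp (- x) = 1)%R). { rewrite <- exp_plus. replace (x + - x)%R with 0%R by ring. apply exp_0. }
  pose proof (exp_pos x). apply Rabs_le_between in H as [Ha Hb]. split; [lra|].
  assert (exp x * (1 - x) <= 1)%R. { rewrite <- E. apply Rmult_le_compat_l; lra. }
  nra. Qed.

Definition cexp (w : C) : C := ((exp (Re w) * cos (Im w))%R, (exp (Re w) * sin (Im w))%R).

Lemma Re_mult_R (z : C) (r : R) : Re (z * RtoC r) = (Re z * r)%R.
Proof. destruct z as [a b]. unfold Cmult, RtoC. simpl. ring. Qed.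
Lemma Im_mult_R (z : C) (r : R) : Im (z * RtoC r) = (Im z * r)%R.
Proof. destruct z as [a b]. unfold Cmult, RtoC. simpl. ring. Qed.

Lemma Rcpow_cexp (x : R) (z : C) : Rcpow x z = cexp (z * RtoC (ln x)).
Proof. unfold Rcpow, cexp. rewrite Re_mult_R, Im_mult_R. reflexivity. Qed.

Lemma cexp_add (u v : C) : cexp (u + v) = cexp u * cexp v.
Proof. destruct u as [a b]; destruct v as [c d]. unfold cexp, Cplus, Cmult. simpl.
  rewrite exp_plus, cos_plus, sin_plus.
  apply injective_projections; simpl; ring. Qed.

Lemma cexp_0 : cexp 0 = 1.
Proof. unfold cexp. simpl. rewrite exp_0, cos_0, sin_0.
  apply injective_projections; simpl; ring. Qed.

Lemma Cmod_cexp (w : C) : Cmod (cexp w) = exp (Re w).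
Proof. unfold Cmod, cexp. simpl. pose proof (sin2_cos2 (snd w)) as Hsc. unfold Rsqr in Hsc.
  match goal with |- sqrt ?E = _ => replace E with (exp (fst w) ^ 2)%R end.
  - apply sqrt_pow2. left; apply exp_pos.
  - transitivity (exp (fst w) ^ 2 * (sin (snd w) * sin (snd w) + cos (snd w) * cos (snd w)))%R.
    + rewrite Hsc; ring.
    + unfold Re, Im. ring. Qed.

Lemma cexp_neq0 (w : C) : cexp w <> 0.
Proof. intro E. apply (f_equal Cmod) in E. rewrite Cmod_cexp, Cmod_0 in E.
  pose proof (exp_pos (Re w)). lra. Qed.

Lemma Cmod_le_sum (p : C) : (Cmod p <= Rabs (Re p) + Rabs (Im p))%R.
Proof. unfold Cmod. rewrite <- (sqrt_pow2 (Rabs (Re p) + Rabs (Im p))).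
  2:{ pose proof (Rabs_pos (Re p)); pose proof (Rabs_pos (Im p)); lra. }
  apply sqrt_le_1_alt. pose proof (Rabs_pos (Re p)); pose proof (Rabs_pos (Im p)).
  rewrite <- (pow2_abs (fst p)), <- (pow2_abs (snd p)). unfold Re, Im in *. nra. Qed.

Lemma cexp_bound (w : C) : (Cmod w <= 1/2)%R -> (Cmod (cexp w - 1 - w) <= 3 * (Cmod w * Cmod w))%R.
Proof. intros Hw. destruct w as [x y].
  pose proof (Rmax_Cmod (x, y)) as HM. simpl in HM.
  assert (Hx : (Rabs x <= 1/2)%R) by (eapply Rle_trans; [apply Rmax_l|]; eapply Rle_trans; [exact HM|exact Hw]).
  assert (Hy : (Rabs y <= 1/2)%R) by (eapply Rle_trans; [apply Rmax_r|]; eapply Rle_trans; [exact HM|exact Hw]).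
  assert (Hm2 : (Cmod (x, y) * Cmod (x, y) = x * x + y * y)%R).
  { replace (Cmod (x, y) * Cmod (x, y))%R with (Cmod (x, y) ^ 2)%R by ring.
    rewrite Cmod2_alt. unfold Re, Im. simpl. ring. }
  rewrite Hm2.
  eapply Rle_trans; [apply Cmod_le_sum|]. unfold cexp. simpl.
  destruct (exp_small x Hx) as [E1 E2].
  destruct (sin_small y Hy) as [S1 S2].
  assert (C1 : (1 - y * y / 2 <= cos y <= 1)%R).
  { split; [apply cos_lb2; apply Rabs_le_between in Hy; lra| apply COS_bound]. }
  pose proof (exp_pos x) as Ep.
  assert (Ex2 : (exp x <= 2)%R). { apply Rabs_le_between in Hx. nra. }
  assert (R1 : (Rabs (exp x * cos y - 1 - x) <= 2 * x * x + y * y)%R).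
  { replace (exp x * cos y - 1 - x)%R with ((exp x - 1 - x) + exp x * (cos y - 1))%R by ring.
    eapply Rle_trans; [apply Rabs_triang|]. rewrite Rabs_mult.
    rewrite (Rabs_pos_eq (exp x)) by lra. rewrite (Rabs_pos_eq (exp x - 1 - x)) by lra.
    rewrite (Rabs_left1 (cos y - 1)) by lra. nra. }
  assert (R2 : (Rabs (exp x * sin y - 0 - y) <= 2 * Rabs x * Rabs y + y * y)%R).
  { replace (exp x * sin y - 0 - y)%R with ((exp x - 1) * sin y + (sin y - y))%R by ring.
    eapply Rle_trans; [apply Rabs_triang|]. rewrite Rabs_mult.
    assert (Rabs (exp x - 1) <= 2 * Rabs x)%R.
    { apply Rabs_le_between in Hx. apply Rabs_le. split.
      - destruct (Rle_or_lt 0 x); [rewrite Rabs_pos_eq | rewrite Rabs_left]; nra.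
      - destruct (Rle_or_lt 0 x); [rewrite Rabs_pos_eq | rewrite Rabs_left]; nra. }
    pose proof (Rabs_pos (exp x - 1)). pose proof (Rabs_pos (sin y)).
    apply Rle_trans with (2 * Rabs x * Rabs y + y * y)%R; [|lra].
    apply Rplus_le_compat; [|exact S2].
    apply Rle_trans with (2 * Rabs x * Rabs (sin y))%R.
    - apply Rmult_le_compat_r; lra.
    - rewrite Rmult_assoc, Rmult_assoc. apply Rmult_le_compat_l; [lra|].
      apply Rmult_le_compat_l; [apply Rabs_pos|exact S1]. }
  assert (2 * Rabs x * Rabs y <= x * x + y * y)%R.
  { assert (Rabs x * Rabs x = x * x)%R by (rewrite <- Rabs_mult; apply Rabs_pos_eq; nra).
    assert (Rabs y * Rabs y = y * y)%R by (rewrite <- Rabs_mult; apply Rabs_pos_eq; nra).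
    pose proof (Rle_0_sqr (Rabs x - Rabs y)). unfold Rsqr in *. nra. }
  replace (exp x * cos y + - (1) + - x)%R with (exp x * cos y - 1 - x)%R by ring.
  replace (exp x * sin y + - 0 + - y)%R with (exp x * sin y - 0 - y)%R by ring. lra. Qed.


Lemma Cmult_integral (x y : C) : x * y = 0 -> x = 0 \/ y = 0.
Proof. intro E. apply (f_equal Cmod) in E. rewrite Cmod_mult, Cmod_0 in E.
  apply Rmult_integral in E. destruct E as [E|E]; apply Cmod_eq_0 in E; auto. Qed.

Lemma nat_ge (x : R) : exists N : nat, (x <= INR N)%R.
Proof. destruct (Rle_or_lt x 0) as [H|H].
  - exists 0%nat. simpl. lra.
  - destruct (archimed x) as [H1 _]. exists (Z.to_nat (up x)).
    rewrite INR_IZR_INZ, Z2Nat.id; [lra|]. apply le_IZR. lra. Qed.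

Lemma cvC_cauchy (x : nat -> C) :
  (forall eps, (0 < eps)%R -> exists N, forall n m, (N <= n)%nat -> (N <= m)%nat -> (Cmod (x n - x m) < eps)%R) ->
  exists L, cvC x L.
Proof. intros H.
  assert (HRe : Cauchy_crit (fun n => Re (x n))).
  { intros e He. destruct (H e He) as [N HN]. exists N. intros n m Hn Hm. unfold Rdist.
    eapply Rle_lt_trans; [|apply (HN n m Hn Hm)]. eapply Rle_trans; [|apply re_le_Cmod].
    right. reflexivity. }
  assert (HIm : Cauchy_crit (fun n => Im (x n))).
  { intros e He. destruct (H e He) as [N HN]. exists N. intros n m Hn Hm. unfold Rdist.
    eapply Rle_lt_trans; [|apply (HN n m Hn Hm)]. eapply Rle_trans; [|apply Rmax_Cmod].
    apply Rmax_r. }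
  destruct (Rcomplete.R_complete _ HRe) as [lr Hr].
  destruct (Rcomplete.R_complete _ HIm) as [li Hi].
  exists (lr, li). intros e He.
  destruct (Hr (e/2)%R) as [N1 H1]; [lra|]. destruct (Hi (e/2)%R) as [N2 H2]; [lra|].
  exists (max N1 N2). intros n Hn. eapply Rle_lt_trans; [apply Cmod_le_sum|].
  specialize (H1 n ltac:(lia)). specialize (H2 n ltac:(lia)). unfold Rdist in *.
  simpl. unfold Re, Im in *. simpl in *.
  replace (fst (x n) + - lr)%R with (fst (x n) - lr)%R by ring.
  replace (snd (x n) + - li)%R with (snd (x n) - li)%R by ring. lra. Qed.

Lemma inv_tele (n : nat) : (0 < INR n)%R -> (/ INR n - / INR (S n) = / (INR n * INR (S n)))%R.
Proof. intros H. rewrite S_INR. field. lra. Qed.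

Lemma prod_cv (x r : nat -> C) (N : nat) (K : R) :
  (1 <= N)%nat ->
  (forall n, (N <= n)%nat -> x (S n) = x n * r n) ->
  (forall n, (N <= n)%nat -> (Cmod (r n - 1) <= K / (INR n * INR (S n)))%R) ->
  exists L, cvC x L.
Proof. intros HN Hx Hr.
  assert (HNpos : (0 < INR N)%R) by (apply lt_0_INR; lia).
  assert (Hpos : forall n, (N <= n)%nat -> (0 < INR n)%R) by (intros n Hn; apply lt_0_INR; lia).
  assert (HK : (0 <= K)%R).
  { specialize (Hr N (le_n N)). pose proof (Cmod_ge_0 (r N - 1)).
    assert (0 < INR N * INR (S N))%R by (apply Rmult_lt_0_compat; [lra|apply lt_0_INR; lia]).
    destruct (Rle_or_lt 0 K); auto. exfalso.
    assert (K / (INR N * INR (S N)) < 0)%R. { apply Rdiv_neg_pos; auto. } lra. }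
  assert (Hstep : forall n, (N <= n)%nat -> (Cmod (x (S n) - x n) <= Cmod (x n) * (K / (INR n * INR (S n))))%R).
  { intros n Hn. rewrite Hx by auto. replace (x n * r n - x n) with (x n * (r n - 1)) by ring.
    rewrite Cmod_mult. apply Rmult_le_compat_l; [apply Cmod_ge_0|auto]. }
  set (M := (Cmod (x N) * exp (K / INR N))%R).
  assert (Hbd : forall k, (Cmod (x (N + k)%nat) <= Cmod (x N) * exp (K * (/ INR N - / INR (N + k))))%R).
  { induction k.
    - rewrite Nat.add_0_r. replace (K * (/ INR N - / INR N))%R with 0%R by ring. rewrite exp_0. lra.
    - rewrite Nat.add_succ_r.
      assert (Hp : (0 < INR (N + k))%R) by (apply Hpos; lia).
      pose proof (Hstep (N + k)%nat ltac:(lia)).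
      pose proof (Cmod_tri3 (x (S (N + k))) (x (N + k)%nat) 0).
      replace (x (S (N + k)) - 0) with (x (S (N + k))) in H0 by ring.
      replace (x (N + k)%nat - 0) with (x (N + k)%nat) in H0 by ring.
      assert (Hq : (0 <= K / (INR (N + k) * INR (S (N + k))))%R).
      { apply Rdiv_le_0_compat; auto. apply Rmult_lt_0_compat; [lra|apply lt_0_INR; lia]. }
      replace (K * (/ INR N - / INR (S (N + k))))%R with
        (K * (/ INR N - / INR (N + k)) + K / (INR (N + k) * INR (S (N + k))))%R.
      2:{ rewrite S_INR. field. lra. }
      rewrite exp_plus.
      pose proof (exp_ineq1_le (K / (INR (N + k) * INR (S (N + k))))).
      pose proof (Cmod_ge_0 (x (N + k)%nat)). pose proof (Cmod_ge_0 (x N)).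
      pose proof (exp_pos (K * (/ INR N - / INR (N + k)))).
      apply Rle_trans with (Cmod (x (N + k)%nat) * (1 + K / (INR (N + k) * INR (S (N + k)))))%R; [lra|].
      rewrite <- Rmult_assoc. apply Rmult_le_compat; lra. }
  assert (HM : forall n, (N <= n)%nat -> (Cmod (x n) <= M)%R).
  { intros n Hn. replace n with (N + (n - N))%nat by lia. eapply Rle_trans; [apply Hbd|].
    unfold M. apply Rmult_le_compat_l; [apply Cmod_ge_0|].
    assert (0 < INR (N + (n - N)))%R by (apply Hpos; lia).
    assert (K * (/ INR N - / INR (N + (n - N))) <= K / INR N)%R.
    { unfold Rdiv. assert (0 < / INR (N + (n - N)))%R by (apply Rinv_0_lt_compat; lra). nra. }
    destruct H0 as [H0|H0]; [left; apply exp_increasing; auto| rewrite H0; lra]. }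
  assert (HM0 : (0 <= M)%R) by (unfold M; apply Rmult_le_pos; [apply Cmod_ge_0| left; apply exp_pos]).
  assert (Hc : forall n k, (N <= n)%nat -> (Cmod (x (n + k)%nat - x n) <= M * K * (/ INR n - / INR (n + k)))%R).
  { intros n k Hn. induction k.
    - rewrite Nat.add_0_r. replace (x n - x n) with (RtoC 0) by ring. rewrite Cmod_0.
      right; ring.
    - rewrite Nat.add_succ_r. eapply Rle_trans; [apply (Cmod_tri3 _ (x (n + k)%nat))|].
      assert (Hp : (0 < INR (n + k))%R) by (apply Hpos; lia).
      pose proof (Hstep (n + k)%nat ltac:(lia)).
      pose proof (HM (n + k)%nat ltac:(lia)).
      assert (Hq : (0 <= K / (INR (n + k) * INR (S (n + k))))%R).
      { apply Rdiv_le_0_compat; auto. apply Rmult_lt_0_compat; [lra|apply lt_0_INR; lia]. }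
      replace (M * K * (/ INR n - / INR (S (n + k))))%R with
        (M * (K / (INR (n + k) * INR (S (n + k)))) + M * K * (/ INR n - / INR (n + k)))%R.
      2:{ rewrite S_INR. field. split; [lra|]. apply Hpos in Hn. lra. }
      apply Rplus_le_compat; auto. eapply Rle_trans; [exact H|].
      apply Rmult_le_compat_r; auto. }
  apply cvC_cauchy. intros e He.
  destruct (nat_ge ((M * K + 1) / e)) as [N0 HN0].
  exists (max N0 N). intros n m Hn Hm.
  assert (Hnn : (INR N0 <= INR n)%R) by (apply le_INR; lia).
  assert (Hmm : (INR N0 <= INR m)%R) by (apply le_INR; lia).
  assert (HMK : (0 <= M * K)%R) by (apply Rmult_le_pos; auto).
  assert (Hdiv : (0 < (M * K + 1) / e)%R) by (apply Rdiv_lt_0_compat; lra).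
  assert (Hgen : forall p q, (N0 <= p)%nat -> (N <= p)%nat -> (p <= q)%nat -> (Cmod (x q - x p) < e)%R).
  { intros p q Hp1 Hp2 Hpq. replace q with (p + (q - p))%nat by lia.
    eapply Rle_lt_trans; [apply Hc; auto|].
    assert (Hpp : (INR N0 <= INR p)%R) by (apply le_INR; lia).
    assert (0 < INR (p + (q - p)))%R by (apply Hpos; lia).
    assert (0 < / INR (p + (q - p)))%R by (apply Rinv_0_lt_compat; lra).
    apply Rle_lt_trans with (M * K * / INR p)%R.
    { apply Rmult_le_compat_l; auto. lra. }
    assert (Hp0 : (0 < INR p)%R) by (apply Hpos; auto).
    apply Rmult_lt_reg_r with (INR p); auto. rewrite Rmult_assoc, Rinv_l by lra. rewrite Rmult_1_r.
    assert ((M * K + 1) <= e * INR p)%R.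
    { apply Rmult_le_reg_r with (/ e)%R. { apply Rinv_0_lt_compat; lra. }
      replace (e * INR p * / e)%R with (INR p) by (field; lra). unfold Rdiv in HN0. lra. }
    lra. }
  destruct (Nat.le_ge_cases n m) as [Hnm|Hnm].
  - rewrite Cmod_sub_sym. apply Hgen; lia.
  - apply Hgen; lia.
Qed.

Lemma prod_cv_nz (x r : nat -> C) (N : nat) (K : R) :
  (1 <= N)%nat ->
  (forall n, (N <= n)%nat -> x (S n) = x n * r n) ->
  (forall n, (N <= n)%nat -> (Cmod (r n - 1) <= K / (INR n * INR (S n)))%R) ->
  x N <> 0 -> (forall n, (N <= n)%nat -> r n <> 0) ->
  exists L : C, L <> 0 /\ cvC x L.
Proof. intros HN Hx Hr HxN HrN.
  destruct (prod_cv x r N K HN Hx Hr) as [L HL].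
  assert (Hxnz : forall k, x (N + k)%nat <> 0).
  { induction k. - rewrite Nat.add_0_r; auto.
    - rewrite Nat.add_succ_r, Hx by lia. intro E. apply Cmult_integral in E.
      destruct E as [E|E]; [auto|]. apply (HrN (N + k)%nat); auto; lia. }
  assert (Hxnz' : forall n, (N <= n)%nat -> x n <> 0).
  { intros n Hn. replace n with (N + (n - N))%nat by lia. auto. }
  destruct (nat_ge (2 * K)) as [N' HN'].
  set (N1 := max N N').
  assert (HN1 : (N <= N1)%nat) by (unfold N1; lia).
  assert (HN1' : (INR N' <= INR N1)%R) by (apply le_INR; unfold N1; lia).
  assert (Hsmall : forall n, (N1 <= n)%nat -> (K / (INR n * INR (S n)) <= 1/2)%R).
  { intros n Hn. assert (Hn0 : (1 <= INR n)%R) by (apply (le_INR 1); lia).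
    assert (Hn1 : (INR N1 <= INR n)%R) by (apply le_INR; lia).
    rewrite S_INR. apply Rmult_le_reg_r with (INR n * (INR n + 1))%R. { nra. }
    unfold Rdiv. rewrite Rmult_assoc, Rinv_l by nra. nra. }
  assert (Hr2 : forall n, (N1 <= n)%nat -> (Cmod (/ r n - 1) <= (2 * K) / (INR n * INR (S n)))%R).
  { intros n Hn. specialize (Hr n ltac:(lia)). specialize (Hsmall n Hn).
    assert (Hrn : (1/2 <= Cmod (r n))%R).
    { pose proof (Cmod_tri3 1 (r n) 0). rewrite Cmod_sub_sym in Hr.
      replace (1 - 0) with (RtoC 1) in H by ring. replace (r n - 0) with (r n) in H by ring.
      rewrite Cmod_1 in H. lra. }
    assert (r n <> 0) by (apply HrN; lia).
    replace (/ r n - 1) with ((1 - r n) / r n) by (field; auto).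
    rewrite Cmod_div by auto. rewrite Cmod_sub_sym.
    apply Rle_trans with (Cmod (r n - 1) / (1/2))%R.
    - unfold Rdiv. apply Rmult_le_compat_l; [apply Cmod_ge_0|]. apply Rinv_le_contravar; lra.
    - unfold Rdiv in *. lra. }
  assert (HN1pos : (1 <= N1)%nat) by lia.
  assert (Hy : forall n, (N1 <= n)%nat -> / x (S n) = / x n * / r n).
  { intros n Hn. rewrite Hx by lia. field. split; [apply HrN|apply Hxnz']; lia. }
  destruct (prod_cv (fun n => / x n) (fun n => / r n) N1 (2 * K) HN1pos Hy Hr2) as [L' HL'].
  exists L. split; auto. intro E.
  pose proof (cvC_mult _ _ _ _ HL HL') as Hm.
  assert (Hm1 : cvC (fun n => x n * / x n) 1).
  { apply (cvC_ext_ev (fun _ => 1) _ _ N); [|apply cvC_const]. intros n Hn. field. apply Hxnz'; auto. }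
  pose proof (cvC_unique _ _ _ Hm Hm1). rewrite E in H.
  replace (0 * L') with (RtoC 0) in H by ring. apply RtoC_inj in H. lra. Qed.


Lemma poch_S (a : C) (k : nat) : poch a (S k) = poch a k * (a + RtoC (INR k)).
Proof. reflexivity. Qed.

Lemma poch_nz (z : C) : (forall n : nat, z + RtoC (INR n) <> 0) -> forall k, poch z k <> 0.
Proof. intros H k. induction k.
  - simpl. apply C1_nz.
  - rewrite poch_S. apply Cmult_neq_0; auto. Qed.

Lemma nonpos_shift (z : C) : ~ nonpos_int z -> forall n : nat, z + RtoC (INR n) <> 0.
Proof. intros H n E. apply H. exists n. rewrite RtoC_opp.
  replace z with ((z + RtoC (INR n)) - RtoC (INR n)) by ring. rewrite E. ring. Qed.

Lemma ln_bounds (t : R) : (0 < t)%R -> (/ (t + 1) <= ln (t + 1) - ln t <= / t)%R.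
Proof. intros Ht. split.
  - pose proof (exp_ineq1_le (ln (t / (t + 1)))). rewrite exp_ln in H.
    2:{ apply Rdiv_lt_0_compat; lra. }
    rewrite ln_div in H by lra.
    assert (t / (t + 1) = 1 - / (t + 1))%R by (field; lra). lra.
  - pose proof (exp_ineq1_le (ln ((t + 1) / t))). rewrite exp_ln in H.
    2:{ apply Rdiv_lt_0_compat; lra. }
    rewrite ln_div in H by lra.
    assert ((t + 1) / t = 1 + / t)%R by (field; lra). lra. Qed.

Definition gratio (z : C) (n : nat) : C :=
  RtoC (INR (S n)) * cexp (z * (RtoC (ln (INR (S n))) - RtoC (ln (INR n)))) / (z + RtoC (INR (S n))).

Lemma gauss_step (z : C) (n : nat) : (forall k : nat, z + RtoC (INR k) <> 0) ->
  gauss_seq z (S n) = gauss_seq z n * gratio z n.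
Proof. intros Hz. unfold gauss_seq, gratio.
  rewrite (poch_S z (S n)). rewrite !Rcpow_cexp.
  replace (z * RtoC (ln (INR (S n)))) with (z * RtoC (ln (INR n)) + z * (RtoC (ln (INR (S n))) - RtoC (ln (INR n)))) by ring.
  rewrite cexp_add.
  replace (fact (S n)) with (S n * fact n)%nat by reflexivity. rewrite mult_INR, RtoC_mult.
  pose proof (poch_nz z Hz (S n)). specialize (Hz (S n)).
  field. auto. Qed.

Lemma gratio_bound (z : C) (n : nat) : (1 <= n)%nat -> (2 * Cmod z <= INR n)%R ->
  (Cmod (gratio z n - 1) <= (2 * (6 * (Cmod z * Cmod z) + Cmod z)) / (INR n * INR (S n)))%R.
Proof. intros Hn Hzn. unfold gratio. rewrite S_INR.
  set (t := INR n) in *.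
  assert (Ht : (1 <= t)%R) by (apply (le_INR 1); lia).
  set (L := (ln (t + 1) - ln t)%R).
  destruct (ln_bounds t ltac:(lra)) as [HL1 HL2]. fold L in HL1, HL2.
  assert (HL0 : (0 <= L)%R). { pose proof (Rinv_0_lt_compat (t + 1) ltac:(lra)). lra. }
  replace (RtoC (ln (t + 1)) - RtoC (ln t)) with (RtoC L) by (unfold L; rewrite RtoC_minus; reflexivity).
  set (w := z * RtoC L).
  set (m := Cmod z) in *.
  assert (Hm0 : (0 <= m)%R) by apply Cmod_ge_0.
  assert (Hw : (Cmod w <= m / t)%R).
  { unfold w. rewrite Cmod_mult, Cmod_R, Rabs_pos_eq by auto. unfold Rdiv.
    apply Rmult_le_compat_l; auto. }
  assert (Hw2 : (Cmod w <= 1/2)%R).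
  { eapply Rle_trans; [exact Hw|]. apply Rmult_le_reg_r with t; [lra|].
    unfold Rdiv. rewrite Rmult_assoc, Rinv_l by lra. lra. }
  pose proof (cexp_bound w Hw2) as HE.
  assert (Hden : (Cmod (z + RtoC (t + 1)) >= (t + 1) / 2)%R).
  { pose proof (Cmod_tri3 (RtoC (t + 1)) (z + RtoC (t + 1)) 0).
    replace (RtoC (t + 1) - (z + RtoC (t + 1))) with (- z) in H by ring.
    replace (RtoC (t + 1) - 0) with (RtoC (t + 1)) in H by ring.
    replace (z + RtoC (t + 1) - 0) with (z + RtoC (t + 1)) in H by ring.
    rewrite Cmod_opp, Cmod_R, Rabs_pos_eq in H by lra. fold m in H. lra. }
  assert (Hdnz : z + RtoC (t + 1) <> 0).
  { intro E. rewrite E, Cmod_0 in Hden. lra. }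
  replace (RtoC (t + 1) * cexp w / (z + RtoC (t + 1)) - 1) with
    ((RtoC (t + 1) * (cexp w - 1 - w) + z * RtoC ((t + 1) * L - 1)) / (z + RtoC (t + 1))).
  2:{ unfold w. rewrite RtoC_minus, RtoC_mult. field. auto. }
  rewrite Cmod_div by auto.
  assert (Hnum : (Cmod (RtoC (t + 1) * (cexp w - 1 - w) + z * RtoC ((t + 1) * L - 1)) <= (6 * (m * m) + m) / t)%R).
  { eapply Rle_trans; [apply Cmod_triangle|]. rewrite !Cmod_mult, !Cmod_R.
    rewrite Rabs_pos_eq by lra. fold m.
    assert (HtL : (0 <= (t + 1) * L - 1 <= / t)%R).
    { split.
      - apply Rmult_le_compat_l with (r := (t + 1)%R) in HL1; [|lra].
        rewrite Rinv_r in HL1 by lra. lra.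
      - apply Rmult_le_compat_l with (r := (t + 1)%R) in HL2; [|lra].
        replace ((t + 1) * / t)%R with (1 + / t)%R in HL2 by (field; lra). lra. }
    rewrite Rabs_pos_eq by lra.
    assert (Hww : (Cmod w * Cmod w <= (m / t) * (m / t))%R).
    { pose proof (Cmod_ge_0 w). apply Rmult_le_compat; auto. }
    assert (Hmt : (0 <= m / t)%R) by (apply Rdiv_le_0_compat; lra).
    apply Rle_trans with ((t + 1) * (3 * ((m / t) * (m / t))) + m * / t)%R.
    { apply Rplus_le_compat.
      - apply Rmult_le_compat_l; [lra|]. lra.
      - apply Rmult_le_compat_l; auto. lra. }
    replace ((t + 1) * (3 * ((m / t) * (m / t))) + m * / t)%R with
      ((3 * (m * m) * (t + 1) + m * t) * / (t * t))%R by (field; lra).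
    replace ((6 * (m * m) + m) / t)%R with ((6 * (m * m) * t + m * t) * / (t * t))%R by (field; lra).
    apply Rmult_le_compat_r. { left; apply Rinv_0_lt_compat; nra. }
    assert (0 <= m * m)%R by nra. nra. }
  pose proof (Cmod_ge_0 (RtoC (t + 1) * (cexp w - 1 - w) + z * RtoC ((t + 1) * L - 1))).
  apply Rle_trans with (((6 * (m * m) + m) / t) / ((t + 1) / 2))%R.
  - unfold Rdiv at 1. apply Rmult_le_compat; auto.
    + left. apply Rinv_0_lt_compat. lra.
    + apply Rinv_le_contravar; lra.
  - right. field. lra. Qed.

Lemma Cinv_nz (y : C) : y <> 0 -> / y <> 0.
Proof. intros H E. pose proof (Cinv_r y H). rewrite E, Cmult_0_r in H0. apply C1_nz. auto. Qed.

Lemma Cdiv_nz (x y : C) : x <> 0 -> y <> 0 -> x / y <> 0.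
Proof. intros. apply Cmult_neq_0; auto. apply Cinv_nz; auto. Qed.

Lemma RtoC_nz (r : R) : r <> 0%R -> RtoC r <> 0.
Proof. intros H E. apply H. apply (f_equal Re) in E. simpl in E. auto. Qed.

Lemma Rcpow_nz (x : R) (z : C) : Rcpow x z <> 0.
Proof. rewrite Rcpow_cexp. apply cexp_neq0. Qed.

Lemma gauss_nz (z : C) (n : nat) : (forall k : nat, z + RtoC (INR k) <> 0) -> gauss_seq z n <> 0.
Proof. intros Hz. unfold gauss_seq. apply Cdiv_nz; [|apply poch_nz; auto].
  apply Cmult_neq_0; [apply RtoC_nz, INR_fact_neq_0|apply Rcpow_nz]. Qed.

Lemma gamma_cv (z : C) : ~ nonpos_int z -> exists L : C, L <> 0 /\ cvC (gauss_seq z) L.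
Proof. intros Hnp. pose proof (nonpos_shift z Hnp) as Hz.
  destruct (nat_ge (2 * Cmod z)) as [N HN].
  set (N1 := max 1 N).
  apply (prod_cv_nz (gauss_seq z) (gratio z) N1 (2 * (6 * (Cmod z * Cmod z) + Cmod z))).
  - unfold N1; lia.
  - intros n _. apply gauss_step; auto.
  - intros n Hn. apply gratio_bound; [unfold N1 in Hn; lia|].
    eapply Rle_trans; [exact HN|]. apply le_INR. unfold N1 in Hn; lia.
  - apply gauss_nz; auto.
  - intros n _. unfold gratio. apply Cdiv_nz; auto.
    apply Cmult_neq_0; [apply RtoC_nz, not_0_INR; lia|apply cexp_neq0]. Qed.

Lemma gamma_lim (z : C) : ~ nonpos_int z -> CGamma z <> 0 /\ cvC (gauss_seq z) (CGamma z).
Proof. intros H. destruct (gamma_cv z H) as [L [HL HcL]]. rewrite (CGamma_of z L HcL). auto. Qed.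

Lemma poch_shift (z : C) (n : nat) : poch z (S n) = z * poch (z + 1) n.
Proof. induction n.
  - simpl. ring.
  - rewrite poch_S, IHn, poch_S, S_INR, RtoC_plus. ring. Qed.

Lemma Rcpow_1 (x : R) : (0 < x)%R -> Rcpow x 1 = RtoC x.
Proof. intros H. unfold Rcpow. simpl.
  replace (1 * ln x)%R with (ln x) by ring. replace (0 * ln x)%R with 0%R by ring.
  rewrite exp_ln, cos_0, sin_0 by auto. unfold RtoC. f_equal; ring. Qed.

Lemma Rcpow_add (x : R) (z w : C) : Rcpow x (z + w) = Rcpow x z * Rcpow x w.
Proof. rewrite !Rcpow_cexp, <- cexp_add. f_equal. ring. Qed.

Lemma cv_n_over (a : C) : (forall n : nat, a + RtoC (INR n) <> 0) ->
  cvC (fun n => RtoC (INR n) / (a + RtoC (INR n))) 1.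
Proof. intros Ha.
  apply (cvC_ext_ev (fun n => / (1 + a * / RtoC (INR n))) _ _ 1).
  { intros n Hn. assert (RtoC (INR n) <> 0) by (apply RtoC_nz, not_0_INR; lia).
    specialize (Ha n).
    assert (1 + a * / RtoC (INR n) <> 0).
    { intro E. apply Ha. replace (a + RtoC (INR n)) with ((1 + a * / RtoC (INR n)) * RtoC (INR n)) by (field; auto).
      rewrite E. ring. }
    field. auto. }
  assert (Hl : cvC (fun n => / (1 + a * / RtoC (INR n))) (/ (1 + a * 0))).
  { apply cvC_inv. { rewrite Cmult_0_r, Cplus_0_r. apply C1_nz. }
    apply cvC_plus; [apply cvC_const|]. apply cvC_mult; [apply cvC_const|apply cvC_inv_n]. }
  replace (/ (1 + a * 0)) with (RtoC 1) in Hl by (rewrite Cmult_0_r, Cplus_0_r; field; apply C1_nz).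
  exact Hl. Qed.

Lemma gamma_fe (z : C) : ~ nonpos_int z -> ~ nonpos_int (z + 1) -> CGamma (z + 1) = z * CGamma z.
Proof. intros Hz Hz1. destruct (gamma_lim z Hz) as [_ H0]. destruct (gamma_lim (z + 1) Hz1) as [_ H1].
  pose proof (nonpos_shift z Hz) as Hzs. pose proof (nonpos_shift (z + 1) Hz1) as Hz1s.
  assert (H2 : cvC (fun n => gauss_seq z n * z * (RtoC (INR n) / (z + 1 + RtoC (INR n)))) (CGamma z * z * 1)).
  { apply cvC_mult; [apply cvC_mult; [auto|apply cvC_const]|]. apply cv_n_over; auto. }
  assert (H3 : cvC (gauss_seq (z + 1)) (CGamma z * z * 1)).
  { refine (cvC_ext_ev _ _ _ 1 _ H2). intros n Hn.
    unfold gauss_seq. rewrite (poch_S (z + 1) n), poch_shift, Rcpow_add, Rcpow_1 by (apply lt_0_INR; lia).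
    pose proof (poch_nz (z + 1) Hz1s n). specialize (Hz1s n). assert (z <> 0).
    { intro E. apply (Hzs 0%nat). rewrite E. simpl. ring. }
    field. auto. }
  rewrite (cvC_unique _ _ _ H1 H3). ring. Qed.


Fixpoint psum (f : nat -> C) (n : nat) : C :=
  match n with O => 0 | S n' => psum f n' + f n' end.

Definition tt (A B c : C) (k : nat) : C :=
  poch A k * poch B k / (poch c k * RtoC (INR (fact k))).

Lemma INR_S_nz (k : nat) : RtoC (INR k) + 1 <> 0.
Proof. rewrite <- RtoC_plus, <- S_INR. apply RtoC_nz, not_0_INR. lia. Qed.

Lemma fact_nz (k : nat) : RtoC (INR (fact k)) <> 0.
Proof. apply RtoC_nz, INR_fact_neq_0. Qed.

Lemma tt_S (A B c : C) (k : nat) : poch c (S k) <> 0 ->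
  tt A B c (S k) = tt A B c k * ((A + RtoC (INR k)) * (B + RtoC (INR k)) / ((c + RtoC (INR k)) * (RtoC (INR k) + 1))).
Proof. intros H. unfold tt. rewrite !poch_S. rewrite poch_S in H.
  replace (fact (S k)) with (S k * fact k)%nat by reflexivity.
  rewrite mult_INR, RtoC_mult, S_INR, <- RtoC_plus.
  pose proof (fact_nz k). pose proof (INR_S_nz k).
  assert (poch c k <> 0) by (intro E; apply H; rewrite E; ring).
  assert (c + RtoC (INR k) <> 0) by (intro E; apply H; rewrite E; ring).
  rewrite RtoC_plus. field. auto. Qed.

Lemma tt_0 (A B c : C) : tt A B c 0 = 1.
Proof. unfold tt. simpl. field. Qed.

Lemma poch_all_shift (c : C) : (forall k, poch c k <> 0) -> forall k, poch (c + 1) k <> 0.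
Proof. intros H k E. apply (H (S k)). rewrite poch_shift, E. ring. Qed.

Lemma C_not0 (c : C) : (forall k, poch c k <> 0) -> forall n : nat, c + RtoC (INR n) <> 0.
Proof. intros H n E. apply (H (S n)). rewrite poch_S, E. ring. Qed.

Lemma tt_shift (A B c : C) (k : nat) : (forall k, poch c k <> 0) ->
  tt A B (c + 1) k = tt A B c k * (c / (c + RtoC (INR k))).
Proof. intros H. unfold tt.
  assert (E : poch (c + 1) k = poch c (S k) / c).
  { rewrite poch_shift. field. specialize (C_not0 c H 0). simpl. rewrite Cplus_0_r. auto. }
  rewrite E, poch_S. pose proof (H k). pose proof (C_not0 c H k). pose proof (C_not0 c H 0) as Hc0.
  simpl in Hc0. rewrite Cplus_0_r in Hc0. pose proof (fact_nz k).
  field. auto. Qed.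

Lemma tele (A B c : C) (n : nat) : (forall k, poch c k <> 0) ->
  c * (c - A - B) * psum (tt A B c) n - (c - A) * (c - B) * psum (tt A B (c + 1)) n
  = - c * RtoC (INR n) * tt A B c n.
Proof. intros H. induction n.
  - simpl. ring.
  - simpl psum. rewrite tt_shift by auto. rewrite (tt_S A B c n) by auto.
    pose proof (C_not0 c H n). pose proof (INR_S_nz n).
    rewrite S_INR, <- RtoC_plus.
    replace (c * (c - A - B) * (psum (tt A B c) n + tt A B c n) -
       (c - A) * (c - B) * (psum (tt A B (c + 1)) n + tt A B c n * (c / (c + RtoC (INR n)))))
     with ((c * (c - A - B) * psum (tt A B c) n - (c - A) * (c - B) * psum (tt A B (c + 1)) n)
           + (c * (c - A - B) * tt A B c n - (c - A) * (c - B) * (tt A B c n * (c / (c + RtoC (INR n)))))) by ring.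
    rewrite IHn. rewrite RtoC_plus. field. auto. Qed.

Lemma c_ne0 (c : C) : (forall k, poch c k <> 0) -> c <> 0.
Proof. intros H. pose proof (C_not0 c H 0). simpl in H0. rewrite Cplus_0_r in H0. auto. Qed.

Lemma step_cv (A B c Y : C) : (forall k, poch c k <> 0) -> c - A - B <> 0 ->
  cvC (fun n => RtoC (INR n) * tt A B c n) 0 -> cvC (psum (tt A B (c + 1))) Y ->
  cvC (psum (tt A B c)) ((c - A) * (c - B) * Y / (c * (c - A - B))).
Proof. intros H Hab Ht HY. pose proof (c_ne0 c H) as Hc.
  apply cvC_ext with (fun n => ((c - A) * (c - B) * psum (tt A B (c + 1)) n - c * (RtoC (INR n) * tt A B c n)) * / (c * (c - A - B))).
  { intros n. pose proof (tele A B c n H).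
    replace (psum (tt A B c) n) with ((c * (c - A - B) * psum (tt A B c) n) / (c * (c - A - B))) by (field; auto).
    replace (c * (c - A - B) * psum (tt A B c) n) with
      ((c - A) * (c - B) * psum (tt A B (c + 1)) n + (- c * RtoC (INR n) * tt A B c n)).
    2:{ rewrite <- H0. ring. }
    field. auto. }
  replace ((c - A) * (c - B) * Y / (c * (c - A - B))) with (((c - A) * (c - B) * Y - c * 0) * / (c * (c - A - B))) by (field; auto).
  apply cvC_mult; [|apply cvC_const]. apply cvC_minus.
  - apply cvC_mult; [apply cvC_const|auto].
  - apply cvC_mult; [apply cvC_const|auto]. Qed.

Lemma cv_c_over (c : C) : (forall k, poch c k <> 0) -> cvC (fun n => c / (c + RtoC (INR n))) 0.
Proof. intros H.
  apply (cvC_ext_ev (fun n => c * / RtoC (INR n) * (RtoC (INR n) / (c + RtoC (INR n)))) _ _ 1).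
  { intros n Hn. assert (RtoC (INR n) <> 0) by (apply RtoC_nz, not_0_INR; lia).
    pose proof (C_not0 c H n). field. auto. }
  replace (RtoC 0) with (c * 0 * 1) by ring.
  apply cvC_mult; [apply cvC_mult; [apply cvC_const|apply cvC_inv_n]|].
  apply cv_n_over. apply C_not0; auto. Qed.

Lemma ntt_shift (A B c : C) : (forall k, poch c k <> 0) ->
  cvC (fun n => RtoC (INR n) * tt A B c n) 0 -> cvC (fun n => RtoC (INR n) * tt A B (c + 1) n) 0.
Proof. intros H Ht.
  apply cvC_ext with (fun n => (RtoC (INR n) * tt A B c n) * (c / (c + RtoC (INR n)))).
  { intros n. rewrite tt_shift by auto. ring. }
  replace (RtoC 0) with (RtoC 0 * 0) by ring. apply cvC_mult; auto. apply cv_c_over; auto. Qed.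

Fixpoint Pm (A B c : C) (m : nat) : C :=
  match m with
  | O => 1
  | S m' => Pm A B c m' * ((c + RtoC (INR m') - A) * (c + RtoC (INR m') - B) /
                            ((c + RtoC (INR m')) * (c + RtoC (INR m') - A - B)))
  end.

Lemma shift_all (A B c : C) : (forall k, poch c k <> 0) ->
  cvC (fun n => RtoC (INR n) * tt A B c n) 0 ->
  forall m : nat, (forall k, poch (c + RtoC (INR m)) k <> 0) /\
    cvC (fun n => RtoC (INR n) * tt A B (c + RtoC (INR m)) n) 0.
Proof. intros H Ht m. induction m.
  - simpl. rewrite Cplus_0_r. auto.
  - destruct IHm as [H1 H2]. rewrite S_INR, RtoC_plus, Cplus_assoc.
    split; [apply poch_all_shift; auto| apply ntt_shift; auto]. Qed.

Lemma iter_cv (A B c : C) : (forall k, poch c k <> 0) ->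
  (forall j : nat, c + RtoC (INR j) - A - B <> 0) ->
  cvC (fun n => RtoC (INR n) * tt A B c n) 0 ->
  forall (m : nat) (Y : C), cvC (psum (tt A B (c + RtoC (INR m)))) Y -> cvC (psum (tt A B c)) (Pm A B c m * Y).
Proof. intros H Hj Ht m. induction m; intros Y HY.
  - simpl in *. rewrite Cplus_0_r in HY. replace (1 * Y) with Y by ring. auto.
  - destruct (shift_all A B c H Ht m) as [H1 H2].
    assert (HY' : cvC (psum (tt A B (c + RtoC (INR m) + 1))) Y).
    { rewrite S_INR, RtoC_plus, Cplus_assoc in HY. auto. }
    pose proof (step_cv A B (c + RtoC (INR m)) Y H1 (Hj m) H2 HY') as Hs.
    specialize (IHm _ Hs). simpl.
    replace (Pm A B c m * ((c + RtoC (INR m) - A) * (c + RtoC (INR m) - B) /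
       ((c + RtoC (INR m)) * (c + RtoC (INR m) - A - B))) * Y)
    with (Pm A B c m * ((c + RtoC (INR m) - A) * (c + RtoC (INR m) - B) * Y /
       ((c + RtoC (INR m)) * (c + RtoC (INR m) - A - B)))).
    + auto.
    + pose proof (C_not0 c H m). pose proof (Hj m). field. auto. Qed.

Lemma Pm_poch (A B c : C) (m : nat) : (forall k, poch c k <> 0) -> (forall k, poch (c - A - B) k <> 0) ->
  Pm A B c m = poch (c - A) m * poch (c - B) m / (poch c m * poch (c - A - B) m).
Proof. intros H1 H2. induction m.
  - simpl. field.
  - simpl Pm. rewrite IHm, !poch_S. pose proof (H1 m). pose proof (H2 m).
    pose proof (C_not0 c H1 m). pose proof (C_not0 (c - A - B) H2 m).
    replace (c + RtoC (INR m) - A - B) with (c - A - B + RtoC (INR m)) by ring.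
    field. auto. Qed.

Definition Gratio (A B c : C) : C := CGamma c * CGamma (c - A - B) / (CGamma (c - A) * CGamma (c - B)).

Lemma Pm_lim (A B c : C) : ~ nonpos_int c -> ~ nonpos_int (c - A - B) ->
  ~ nonpos_int (c - A) -> ~ nonpos_int (c - B) -> cvC (Pm A B c) (Gratio A B c).
Proof. intros H1 H2 H3 H4.
  destruct (gamma_lim _ H1) as [G1 L1]. destruct (gamma_lim _ H2) as [G2 L2].
  destruct (gamma_lim _ H3) as [G3 L3]. destruct (gamma_lim _ H4) as [G4 L4].
  pose proof (poch_nz _ (nonpos_shift _ H1)) as P1. pose proof (poch_nz _ (nonpos_shift _ H2)) as P2.
  pose proof (poch_nz _ (nonpos_shift _ H3)) as P3. pose proof (poch_nz _ (nonpos_shift _ H4)) as P4.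
  apply cvC_shift.
  assert (Hl : cvC (fun n => gauss_seq c n * gauss_seq (c - A - B) n * / (gauss_seq (c - A) n * gauss_seq (c - B) n))
     (Gratio A B c)).
  { unfold Gratio. apply cvC_mult; [apply cvC_mult; auto|]. apply cvC_inv.
    - apply Cmult_neq_0; auto.
    - apply cvC_mult; auto. }
  refine (cvC_ext_ev _ _ _ 1 _ Hl). intros n Hn.
  rewrite (Pm_poch A B c (S n)) by auto. unfold gauss_seq.
  assert (Ec : Rcpow (INR n) c = Rcpow (INR n) (c - A) * Rcpow (INR n) (c - B) / Rcpow (INR n) (c - A - B)).
  { rewrite <- Rcpow_add. replace (c - A + (c - B)) with (c + (c - A - B)) by ring.
    rewrite Rcpow_add. field. apply Rcpow_nz. }
  rewrite Ec.
  pose proof (Rcpow_nz (INR n) (c - A)). pose proof (Rcpow_nz (INR n) (c - B)).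
  pose proof (Rcpow_nz (INR n) (c - A - B)). pose proof (fact_nz n).
  pose proof (P1 (S n)). pose proof (P2 (S n)). pose proof (P3 (S n)). pose proof (P4 (S n)).
  field. repeat split; auto. Qed.

Lemma cauchy_tele (x : nat -> C) (D : R) (N : nat) : (1 <= N)%nat -> (0 <= D)%R ->
  (forall n j, (N <= n)%nat -> (Cmod (x (n + j)%nat - x n) <= D * (/ INR n - / INR (n + j)))%R) ->
  exists L, cvC x L.
Proof. intros HN HD Hc. apply cvC_cauchy. intros e He.
  destruct (nat_ge ((D + 1) / e)) as [N0 HN0].
  exists (max N0 N). intros n m Hn Hm.
  assert (Hpos : forall p, (N <= p)%nat -> (0 < INR p)%R) by (intros p Hp; apply lt_0_INR; lia).
  assert (Hgen : forall p q, (N0 <= p)%nat -> (N <= p)%nat -> (p <= q)%nat -> (Cmod (x q - x p) < e)%R).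
  { intros p q Hp1 Hp2 Hpq. replace q with (p + (q - p))%nat by lia.
    eapply Rle_lt_trans; [apply Hc; auto|].
    assert (Hpp : (INR N0 <= INR p)%R) by (apply le_INR; lia).
    assert (0 < INR (p + (q - p)))%R by (apply Hpos; lia).
    assert (0 < / INR (p + (q - p)))%R by (apply Rinv_0_lt_compat; lra).
    apply Rle_lt_trans with (D * / INR p)%R.
    { apply Rmult_le_compat_l; auto. lra. }
    assert (Hp0 : (0 < INR p)%R) by (apply Hpos; auto).
    apply Rmult_lt_reg_r with (INR p); auto. rewrite Rmult_assoc, Rinv_l by lra. rewrite Rmult_1_r.
    assert ((D + 1) <= e * INR p)%R.
    { apply Rmult_le_reg_r with (/ e)%R. { apply Rinv_0_lt_compat; lra. }
      replace (e * INR p * / e)%R with (INR p) by (field; lra). unfold Rdiv in HN0. lra. }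
    lra. }
  destruct (Nat.le_ge_cases n m) as [Hnm|Hnm].
  - rewrite Cmod_sub_sym. apply Hgen; lia.
  - apply Hgen; lia.
Qed.

Lemma cvC_bound_lim (x : nat -> C) (L P : C) (D : R) (N : nat) :
  cvC x L -> (forall n, (N <= n)%nat -> (Cmod (x n - P) <= D)%R) -> (Cmod (L - P) <= D)%R.
Proof. intros H Hb. destruct (Rle_or_lt (Cmod (L - P)) D) as [|Hlt]; auto. exfalso.
  destruct (H (Cmod (L - P) - D)%R) as [N1 HN1]; [lra|].
  specialize (HN1 (max N N1) ltac:(lia)). specialize (Hb (max N N1) ltac:(lia)).
  pose proof (Cmod_tri3 L (x (max N N1)) P). rewrite Cmod_sub_sym in HN1. lra. Qed.

Fixpoint rho (al be N : R) (k : nat) : R :=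
  match k with
  | O => 1%R
  | S k' => (rho al be N k' * ((al + INR k') * (be + INR k') / ((N + INR k') * (INR k' + 1))))%R
  end.

Lemma Cmod_plus_R_ge (c : C) (r : R) : (Re c + r <= Cmod (c + RtoC r))%R.
Proof. eapply Rle_trans; [|apply re_le_Cmod]. simpl. unfold Re. apply Rle_abs. Qed.

Lemma rho_nonneg (al be N : R) (k : nat) : (0 <= al)%R -> (0 <= be)%R -> (0 < N)%R -> (0 <= rho al be N k)%R.
Proof. intros Ha Hb HN. induction k; simpl; [lra|].
  apply Rmult_le_pos; auto. pose proof (pos_INR k).
  apply Rdiv_le_0_compat; [apply Rmult_le_pos; lra| apply Rmult_lt_0_compat; lra]. Qed.

Lemma tt_rho (A B c : C) (k : nat) : (0 < Re c)%R ->
  (Cmod (tt A B c k) <= rho (Cmod A) (Cmod B) (Re c) k)%R.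
Proof. intros Hc.
  assert (Hcn : forall n : nat, c + RtoC (INR n) <> 0).
  { intros n E. pose proof (Cmod_plus_R_ge c (INR n)). rewrite E, Cmod_0 in H. pose proof (pos_INR n). lra. }
  induction k.
  - rewrite tt_0, Cmod_1. simpl. lra.
  - rewrite tt_S by (apply poch_nz; auto). simpl rho. rewrite Cmod_mult.
    pose proof (pos_INR k).
    apply Rmult_le_compat; [apply Cmod_ge_0|apply Cmod_ge_0|auto|].
    rewrite Cmod_div by (apply Cmult_neq_0; [auto|apply INR_S_nz]).
    rewrite !Cmod_mult.
    assert (E1 : Cmod (RtoC (INR k) + 1) = (INR k + 1)%R).
    { rewrite <- RtoC_plus, Cmod_R, Rabs_pos_eq; lra. }
    rewrite E1.
    assert (HA : (Cmod (A + RtoC (INR k)) <= Cmod A + INR k)%R).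
    { eapply Rle_trans; [apply Cmod_triangle|]. rewrite Cmod_R, Rabs_pos_eq; lra. }
    assert (HB : (Cmod (B + RtoC (INR k)) <= Cmod B + INR k)%R).
    { eapply Rle_trans; [apply Cmod_triangle|]. rewrite Cmod_R, Rabs_pos_eq; lra. }
    pose proof (Cmod_plus_R_ge c (INR k)) as HC.
    unfold Rdiv. apply Rmult_le_compat.
    + apply Rmult_le_pos; apply Cmod_ge_0.
    + left. apply Rinv_0_lt_compat. apply Rmult_lt_0_compat; lra.
    + apply Rmult_le_compat; auto; apply Cmod_ge_0.
    + apply Rinv_le_contravar; [apply Rmult_lt_0_compat; lra|].
      apply Rmult_le_compat_r; lra. Qed.

Lemma poly_ineq (al be N k : R) : (0 <= al)%R -> (0 <= be)%R -> (1 <= k)%R ->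
  (3 * al * be + 2 * al + 2 * be + 1 <= N)%R ->
  ((al + k) * (be + k) * (k + 2) <= k * ((N + k) * (k + 1)))%R.
Proof. intros Ha Hb Hk HN.
  assert (E : (k * ((N + k) * (k + 1)) - (al + k) * (be + k) * (k + 2) =
     (N - 1 - al - be) * (k * k) + (N - al * be - 2 * al - 2 * be) * k - 2 * al * be)%R) by ring.
  assert (0 <= al * be)%R by (apply Rmult_le_pos; auto).
  assert (H1 : (0 <= N - 1 - al - be)%R) by lra.
  assert (H2 : ((N - 1 - al - be) * k <= (N - 1 - al - be) * (k * k))%R).
  { apply Rmult_le_compat_l; auto. nra. }
  assert (H3 : (2 * al * be <= (2 * al * be) * k)%R) by nra.
  assert (H4 : (0 <= (N - 1 - al - be + N - al * be - 2 * al - 2 * be - 2 * al * be) * k)%R).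
  { apply Rmult_le_pos; lra. }
  nra. Qed.

Lemma rho_tele (al be N : R) (j : nat) : (0 <= al)%R -> (0 <= be)%R -> (0 < N)%R ->
  (3 * al * be + 2 * al + 2 * be + 1 <= N)%R ->
  (rho al be N (S j) <= (2 * al * be / N) * (/ INR (S j) - / INR (S (S j))))%R.
Proof. intros Ha Hb HN Hc. induction j.
  - simpl. right. field. lra.
  - change (rho al be N (S (S j))) with
      (rho al be N (S j) * ((al + INR (S j)) * (be + INR (S j)) / ((N + INR (S j)) * (INR (S j) + 1))))%R.
    set (k := INR (S j)) in *.
    assert (Hk : (1 <= k)%R) by (unfold k; rewrite S_INR; pose proof (pos_INR j); lra).
    replace (INR (S (S j))) with (k + 1)%R in * by (unfold k; rewrite (S_INR (S j)); ring).
    replace (INR (S (S (S j)))) with (k + 2)%R by (unfold k; rewrite !S_INR; ring).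
    pose proof (rho_nonneg al be N (S j) Ha Hb HN).
    assert (Hq : ((al + k) * (be + k) / ((N + k) * (k + 1)) <= k / (k + 2))%R).
    { apply Rmult_le_reg_r with ((N + k) * (k + 1) * (k + 2))%R. { apply Rmult_lt_0_compat; [apply Rmult_lt_0_compat|]; lra. }
      replace ((al + k) * (be + k) / ((N + k) * (k + 1)) * ((N + k) * (k + 1) * (k + 2)))%R
        with ((al + k) * (be + k) * (k + 2))%R by (field; lra).
      replace (k / (k + 2) * ((N + k) * (k + 1) * (k + 2)))%R with (k * ((N + k) * (k + 1)))%R by (field; lra).
      apply poly_ineq; auto. }
    assert (Hq0 : (0 <= (al + k) * (be + k) / ((N + k) * (k + 1)))%R).
    { apply Rdiv_le_0_compat; [apply Rmult_le_pos; lra| apply Rmult_lt_0_compat; lra]. }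
    apply Rle_trans with ((2 * al * be / N) * (/ k - / (k + 1)) * (k / (k + 2)))%R.
    + apply Rmult_le_compat; auto.
    + right. field. lra. Qed.

Lemma tail_cv (A B c : C) : (0 < Re c)%R ->
  (3 * Cmod A * Cmod B + 2 * Cmod A + 2 * Cmod B + 1 <= Re c)%R ->
  exists Y : C, cvC (psum (tt A B c)) Y /\ (Cmod (Y - 1) <= 2 * Cmod A * Cmod B / Re c)%R.
Proof. intros HN Hbig. set (D := (2 * Cmod A * Cmod B / Re c)%R).
  pose proof (Cmod_ge_0 A). pose proof (Cmod_ge_0 B).
  assert (HD : (0 <= D)%R).
  { unfold D. apply Rdiv_le_0_compat; auto. apply Rmult_le_pos; [|lra]. lra. }
  assert (Hc : forall n j, (1 <= n)%nat ->
     (Cmod (psum (tt A B c) (n + j) - psum (tt A B c) n) <= D * (/ INR n - / INR (n + j)))%R).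
  { intros n j Hn. induction j.
    - rewrite Nat.add_0_r. replace (psum (tt A B c) n - psum (tt A B c) n) with (RtoC 0) by ring.
      rewrite Cmod_0. right; ring.
    - rewrite Nat.add_succ_r. simpl psum.
      replace (psum (tt A B c) (n + j) + tt A B c (n + j) - psum (tt A B c) n) with
        ((psum (tt A B c) (n + j) - psum (tt A B c) n) + tt A B c (n + j)) by ring.
      eapply Rle_trans; [apply Cmod_triangle|].
      pose proof (tt_rho A B c (n + j) HN).
      destruct (n + j)%nat as [|p] eqn:Enj; [lia|].
      pose proof (rho_tele (Cmod A) (Cmod B) (Re c) p H H0 HN Hbig) as Hrt. fold D in Hrt.
      assert (0 < INR n)%R by (apply lt_0_INR; lia).
      replace (D * (/ INR n - / INR (S (S p))))%R with
        (D * (/ INR n - / INR (S p)) + D * (/ INR (S p) - / INR (S (S p))))%R by ring.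
      apply Rplus_le_compat; lra. }
  destruct (cauchy_tele (psum (tt A B c)) D 1 (le_n 1) HD) as [Y HY].
  { intros n j Hn. apply Hc; auto. }
  exists Y. split; auto.
  apply (cvC_bound_lim _ _ _ _ 1 HY). intros n Hn.
  replace n with (1 + (n - 1))%nat by lia.
  pose proof (Hc 1%nat (n - 1)%nat (le_n 1)).
  replace (psum (tt A B c) 1) with (RtoC 1) in H1 by (simpl; rewrite tt_0; ring).
  eapply Rle_trans; [exact H1|]. simpl INR at 1.
  assert (0 < INR (1 + (n - 1)))%R by (apply lt_0_INR; lia).
  assert (0 < / INR (1 + (n - 1)))%R by (apply Rinv_0_lt_compat; lra).
  rewrite Rinv_1. nra. Qed.

Lemma cvC_squeeze_R (v : nat -> C) (L : C) (d : nat -> R) (N0 : nat) :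
  (forall eps, (0 < eps)%R -> exists N, forall n, (N <= n)%nat -> (d n < eps)%R) ->
  (forall n, (N0 <= n)%nat -> (Cmod (v n - L) <= d n)%R) -> cvC v L.
Proof. intros Hd Hb e He. destruct (Hd e He) as [N HN]. exists (max N N0). intros n Hn.
  eapply Rle_lt_trans; [apply Hb; lia|]. apply HN; lia. Qed.

Lemma dm_small (K0 r : R) : (0 <= K0)%R ->
  forall eps, (0 < eps)%R -> exists N, forall n, (N <= n)%nat -> (K0 / (r + INR n) < eps)%R.
Proof. intros HK eps He. destruct (nat_ge (K0 / eps + Rabs r + 1)) as [N HN]. exists N. intros n Hn.
  assert (Hn' : (INR N <= INR n)%R) by (apply le_INR; auto).
  pose proof (Rle_abs (- r)). rewrite Rabs_Ropp in H.
  assert (HKe : (0 <= K0 / eps)%R) by (apply Rdiv_le_0_compat; lra).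
  assert (Hp : (K0 / eps + 1 <= r + INR n)%R) by lra.
  apply Rle_lt_trans with (K0 / (K0 / eps + 1))%R.
  - unfold Rdiv at 1 2. apply Rmult_le_compat_l; auto. apply Rinv_le_contravar; lra.
  - apply Rmult_lt_reg_r with (K0 / eps + 1)%R; [lra|].
    unfold Rdiv at 1. rewrite Rmult_assoc, Rinv_l by lra.
    replace (eps * (K0 / eps + 1))%R with (K0 + eps)%R by (field; lra). lra. Qed.

Lemma gauss (A B c : C) : (forall k, poch c k <> 0) -> ~ nonpos_int (c - A - B) ->
  ~ nonpos_int (c - A) -> ~ nonpos_int (c - B) ->
  cvC (fun n => RtoC (INR n) * tt A B c n) 0 -> cvC (psum (tt A B c)) (Gratio A B c).
Proof. intros Hc Habc Hac Hbc Ht.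
  assert (Hnc : ~ nonpos_int c).
  { intros [n En]. apply (C_not0 c Hc n). rewrite En, RtoC_opp. ring. }
  assert (Hj : forall j : nat, c + RtoC (INR j) - A - B <> 0).
  { intros j E. apply (nonpos_shift _ Habc j). rewrite <- E. ring. }
  set (al := Cmod A). set (be := Cmod B).
  set (bnd := (3 * al * be + 2 * al + 2 * be + 1)%R).
  assert (Hal : (0 <= al)%R) by apply Cmod_ge_0. assert (Hbe : (0 <= be)%R) by apply Cmod_ge_0.
  assert (Hbnd : (1 <= bnd)%R) by (unfold bnd; assert (0 <= al * be)%R by nra; lra).
  destruct (nat_ge (bnd - Re c)) as [m0 Hm0].
  assert (Hm : forall m, (m0 <= m)%nat -> exists Y : C,
     cvC (psum (tt A B c)) (Pm A B c m * Y) /\ (Cmod (Y - 1) <= 2 * al * be / (Re c + INR m))%R).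
  { intros m Hmm. assert (HR : Re (c + RtoC (INR m)) = (Re c + INR m)%R) by (simpl; unfold Re; simpl; ring).
    assert (Hmm' : (INR m0 <= INR m)%R) by (apply le_INR; auto).
    destruct (tail_cv A B (c + RtoC (INR m))) as [Y [HY HY1]]; rewrite ?HR; [lra|unfold bnd, al, be in *; lra|].
    exists Y. split; [apply iter_cv; auto|]. rewrite HR in HY1. auto. }
  destruct (Hm m0 (le_n m0)) as [Y0 [HX _]].
  set (X := Pm A B c m0 * Y0) in *.
  assert (HPX : cvC (Pm A B c) X).
  { destruct (cvC_bounded _ _ (Pm_lim A B c Hnc Habc Hac Hbc)) as [N1 HN1].
    apply (cvC_squeeze_R _ _ (fun m => ((Cmod (Gratio A B c) + 1) * (2 * al * be) / (Re c + INR m))%R) (max N1 m0)).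
    - apply dm_small. apply Rmult_le_pos; [pose proof (Cmod_ge_0 (Gratio A B c)); lra|].
      assert (0 <= al * be)%R by nra. lra.
    - intros m Hmm. destruct (Hm m ltac:(lia)) as [Y [HY HY1]].
      pose proof (cvC_unique _ _ _ HX HY) as EX. rewrite EX.
      replace (Pm A B c m - Pm A B c m * Y) with (Pm A B c m * (1 - Y)) by ring.
      rewrite Cmod_mult, Cmod_sub_sym.
      specialize (HN1 m ltac:(lia)).
      assert (Hmm' : (INR m0 <= INR m)%R) by (apply le_INR; lia).
      assert (Hpos : (0 < Re c + INR m)%R) by lra.
      unfold Rdiv. rewrite Rmult_assoc. apply Rmult_le_compat; [apply Cmod_ge_0|apply Cmod_ge_0|auto|].
      unfold Rdiv in HY1. exact HY1. }
  rewrite <- (cvC_unique _ _ _ HPX (Pm_lim A B c Hnc Habc Hac Hbc)). exact HX. Qed.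


Lemma cv_ratio (x y : C) : cvC (fun n => (x + RtoC (INR n)) / (y + RtoC (INR n))) 1.
Proof.
  destruct (nat_ge (Cmod y + 1)) as [N HN].
  apply (cvC_ext_ev (fun n => (1 + x * / RtoC (INR n)) * / (1 + y * / RtoC (INR n))) _ _ (max 1 N)).
  { intros n Hn. assert (Hn0 : RtoC (INR n) <> 0) by (apply RtoC_nz, not_0_INR; lia).
    assert (Hy : y + RtoC (INR n) <> 0).
    { intro E. assert (INR N <= INR n)%R by (apply le_INR; lia).
      assert (y = - RtoC (INR n)) by (replace y with ((y + RtoC (INR n)) - RtoC (INR n)) by ring; rewrite E; ring).
      rewrite H0, Cmod_opp, Cmod_R, Rabs_pos_eq in HN by apply pos_INR. lra. }
    assert (1 + y * / RtoC (INR n) <> 0).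
    { intro E. apply Hy. replace (y + RtoC (INR n)) with ((1 + y * / RtoC (INR n)) * RtoC (INR n)) by (field; auto).
      rewrite E. ring. }
    field. auto. }
  assert (Hl : cvC (fun n => (1 + x * / RtoC (INR n)) * / (1 + y * / RtoC (INR n))) ((1 + x * 0) * / (1 + y * 0))).
  { apply cvC_mult.
    - apply cvC_plus; [apply cvC_const|]. apply cvC_mult; [apply cvC_const|apply cvC_inv_n].
    - apply cvC_inv. { rewrite Cmult_0_r, Cplus_0_r. apply C1_nz. }
      apply cvC_plus; [apply cvC_const|]. apply cvC_mult; [apply cvC_const|apply cvC_inv_n]. }
  replace ((1 + x * 0) * / (1 + y * 0)) with (RtoC 1) in Hl by (rewrite !Cmult_0_r, !Cplus_0_r; field; apply C1_nz).
  exact Hl. Qed.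

Lemma Re_plus (x y : C) : Re (x + y) = (Re x + Re y)%R.
Proof. reflexivity. Qed.

Lemma diverge (T : nat -> C) (g s : C) : g <> 0 ->
  cvC (fun n => RtoC (INR n) * T n) g -> cvC (psum T) s -> False.
Proof. intros Hg HT Hs.
  pose proof (proj1 (Cmod_gt_0 g) Hg) as Hg0. set (m := Cmod g) in *.
  destruct (HT (m / 2)%R) as [K1 HK1]; [lra|].
  destruct (Hs (m / 8)%R) as [K2 HK2]; [lra|].
  set (n := max 1 (max K1 K2)).
  assert (Hn1 : (1 <= n)%nat) by (unfold n; lia).
  assert (Hnpos : (0 < INR n)%R) by (apply lt_0_INR; lia).
  assert (Hterm : forall k, (K1 <= k)%nat -> (1 <= k)%nat -> (m * m / (2 * INR k) <= Re (Cconj g * T k))%R).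
  { intros k Hk Hk1. specialize (HK1 k Hk).
    assert (Hkp : (0 < INR k)%R) by (apply lt_0_INR; lia).
    assert (E1 : Re (Cconj g * (RtoC (INR k) * T k)) = (INR k * Re (Cconj g * T k))%R).
    { replace (Cconj g * (RtoC (INR k) * T k)) with (RtoC (INR k) * (Cconj g * T k)) by ring.
      apply re_scal_l. }
    assert (E2 : Re (Cconj g * g) = (m * m)%R).
    { replace (Cconj g * g) with (g * Cconj g) by ring. rewrite <- Cmod2_conj. simpl. unfold m. ring. }
    assert (E3 : (Rabs (Re (Cconj g * (RtoC (INR k) * T k - g))) <= m * (m / 2))%R).
    { eapply Rle_trans; [apply re_le_Cmod|]. rewrite Cmod_mult, Cmod_conj. fold m.
      apply Rmult_le_compat_l; lra. }
    replace (Cconj g * (RtoC (INR k) * T k)) with (Cconj g * g + Cconj g * (RtoC (INR k) * T k - g)) in E1 by ring.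
    rewrite Re_plus, E2 in E1. apply Rabs_le_between in E3.
    apply Rmult_le_reg_l with (INR k); auto.
    replace (INR k * (m * m / (2 * INR k)))%R with (m * m / 2)%R by (field; lra). lra. }
  assert (Hsum : forall j, (j <= n)%nat ->
     (INR j * (m * m / (4 * INR n)) <= Re (Cconj g * (psum T (n + j) - psum T n)))%R).
  { induction j; intros Hj.
    - rewrite Nat.add_0_r. replace (psum T n - psum T n) with (RtoC 0) by ring.
      simpl. lra.
    - rewrite Nat.add_succ_r. simpl psum.
      replace (Cconj g * (psum T (n + j) + T (n + j)%nat - psum T n)) with
        (Cconj g * (psum T (n + j) - psum T n) + Cconj g * T (n + j)%nat) by ring.
      rewrite Re_plus. specialize (IHj ltac:(lia)).
      pose proof (Hterm (n + j)%nat ltac:(unfold n; lia) ltac:(lia)).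
      assert (m * m / (4 * INR n) <= m * m / (2 * INR (n + j)))%R.
      { assert (INR (n + j) <= 2 * INR n)%R by (rewrite plus_INR; assert (INR j <= INR n)%R by (apply le_INR; lia); lra).
        assert (0 < INR (n + j))%R by (apply lt_0_INR; lia).
        unfold Rdiv. apply Rmult_le_compat_l; [nra|]. apply Rinv_le_contravar; lra. }
      rewrite S_INR. lra. }
  specialize (Hsum n (le_n n)).
  replace (INR n * (m * m / (4 * INR n)))%R with (m * m / 4)%R in Hsum by (field; lra).
  assert (Hc : (Cmod (psum T (n + n) - psum T n) < m / 4)%R).
  { pose proof (HK2 (n + n)%nat ltac:(unfold n; lia)). pose proof (HK2 n ltac:(unfold n; lia)).
    pose proof (Cmod_tri3 (psum T (n + n)) s (psum T n)). rewrite (Cmod_sub_sym s) in H1. lra. }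
  pose proof (re_le_Cmod (Cconj g * (psum T (n + n) - psum T n))) as Hr.
  rewrite Cmod_mult, Cmod_conj in Hr. fold m in Hr. apply Rabs_le_between in Hr.
  assert (m * Cmod (psum T (n + n) - psum T n) <= m * (m / 4))%R by (apply Rmult_le_compat_l; lra).
  nra. Qed.

Lemma poch_d2 (d : C) (k : nat) : poch (d + 2) k * (d * (d + 1)) = poch d k * ((d + RtoC (INR k)) * (d + RtoC (INR k) + 1)).
Proof. induction k.
  - simpl. ring.
  - rewrite !poch_S. rewrite S_INR, RtoC_plus.
    replace (poch (d + 2) k * (d + 2 + RtoC (INR k)) * (d * (d + 1))) with
      ((poch (d + 2) k * (d * (d + 1))) * (d + 2 + RtoC (INR k))) by ring.
    rewrite IHk. ring. Qed.

Lemma F32_eq (a b c d : C) (k : nat) : (forall k, poch (c + 1) k <> 0) -> (forall k, poch d k <> 0) ->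
  d <> 0 -> d + 1 <> 0 ->
  F32_term a b (d + 2) (c + 1) d 1 k =
  tt a b (c + 1) k * ((d + RtoC (INR k)) * (d + RtoC (INR k) + 1) / (d * (d + 1))).
Proof. intros Hc Hd Hd0 Hd1. unfold F32_term, tt. rewrite Cpow_1_l.
  assert (E : poch (d + 2) k = poch d k * ((d + RtoC (INR k)) * (d + RtoC (INR k) + 1)) / (d * (d + 1))).
  { rewrite <- poch_d2. field. auto. }
  rewrite E. pose proof (Hc k). pose proof (Hd k). pose proof (fact_nz k).
  field. auto. Qed.

Definition uu (a b c : C) := tt a b (c + 1).

Lemma u_S (a b c : C) (Hc : forall k : nat, poch (c + 1) k <> 0) (k : nat) : (uu a b c) (S k) * ((c + 1 + RtoC (INR k)) * (RtoC (INR k) + 1)) = (uu a b c) k * ((a + RtoC (INR k)) * (b + RtoC (INR k))).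
Proof. unfold uu. rewrite tt_S by auto. pose proof (C_not0 _ Hc k). pose proof (INR_S_nz k).
  field. auto. Qed.

Lemma ident1 (a b c : C) (Hc : forall k : nat, poch (c + 1) k <> 0) (n : nat) : (c - a - b) * psum (fun k => RtoC (INR k) * (uu a b c) k) n - a * b * psum (uu a b c) n
   = - RtoC (INR n) * (c + RtoC (INR n)) * (uu a b c) n.
Proof. induction n.
  - simpl. ring.
  - simpl psum. pose proof (u_S a b c Hc n) as E. set (u := uu a b c) in *.
    replace ((c - a - b) * (psum (fun k => RtoC (INR k) * u k) n + RtoC (INR n) * u n) - a * b * (psum u n + u n))
      with (((c - a - b) * psum (fun k => RtoC (INR k) * u k) n - a * b * psum u n) + ((c - a - b) * RtoC (INR n) * u n - a * b * u n)) by ring.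
    rewrite IHn, S_INR, RtoC_plus.
    replace (- (RtoC (INR n) + 1) * (c + (RtoC (INR n) + 1)) * u (S n)) with
      (- (u (S n) * ((c + 1 + RtoC (INR n)) * (RtoC (INR n) + 1)))) by ring.
    rewrite E. ring. Qed.

Lemma ident2 (a b c : C) (Hc : forall k : nat, poch (c + 1) k <> 0) (n : nat) : (c - a - b - 1) * psum (fun k => RtoC (INR k) * (RtoC (INR k) - 1) * (uu a b c) k) n
   - (1 + a) * (1 + b) * psum (fun k => RtoC (INR k) * (uu a b c) k) n
   = - (RtoC (INR n) - 1) * RtoC (INR n) * (c + RtoC (INR n)) * (uu a b c) n.
Proof. induction n.
  - simpl. ring.
  - simpl psum. pose proof (u_S a b c Hc n) as E. set (u := uu a b c) in *.
    replace ((c - a - b - 1) * (psum (fun k => RtoC (INR k) * (RtoC (INR k) - 1) * u k) n + RtoC (INR n) * (RtoC (INR n) - 1) * u n)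
      - (1 + a) * (1 + b) * (psum (fun k => RtoC (INR k) * u k) n + RtoC (INR n) * u n))
      with (((c - a - b - 1) * psum (fun k => RtoC (INR k) * (RtoC (INR k) - 1) * u k) n
      - (1 + a) * (1 + b) * psum (fun k => RtoC (INR k) * u k) n) +
      ((c - a - b - 1) * RtoC (INR n) * (RtoC (INR n) - 1) * u n - (1 + a) * (1 + b) * RtoC (INR n) * u n)) by ring.
    rewrite IHn, S_INR, RtoC_plus.
    replace (- (RtoC (INR n) + 1 - 1) * (RtoC (INR n) + 1) * (c + (RtoC (INR n) + 1)) * u (S n)) with
      (- RtoC (INR n) * (u (S n) * ((c + 1 + RtoC (INR n)) * (RtoC (INR n) + 1)))) by ring.
    rewrite E. ring. Qed.


Lemma identT (a b c d : C) (Hc : forall k : nat, poch (c + 1) k <> 0) (Hd : forall k, poch d k <> 0)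
  (Hd0 : d <> 0) (Hd1 : d + 1 <> 0) (n : nat) :
  d * (d + 1) * psum (F32_term a b (d + 2) (c + 1) d 1) n =
  d * (d + 1) * psum (uu a b c) n + (2 * d + 2) * psum (fun k => RtoC (INR k) * uu a b c k) n
  + psum (fun k => RtoC (INR k) * (RtoC (INR k) - 1) * uu a b c k) n.
Proof. induction n.
  - simpl. ring.
  - simpl psum. rewrite F32_eq by auto. unfold uu in *.
    replace (d * (d + 1) * (psum (F32_term a b (d + 2) (c + 1) d 1) n +
       tt a b (c + 1) n * ((d + RtoC (INR n)) * (d + RtoC (INR n) + 1) / (d * (d + 1)))))
    with (d * (d + 1) * psum (F32_term a b (d + 2) (c + 1) d 1) n +
       tt a b (c + 1) n * ((d + RtoC (INR n)) * (d + RtoC (INR n) + 1))) by (field; auto).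
    rewrite IHn. ring. Qed.

Lemma psum_sum_n (f : nat -> C) (n : nat) : sum_n f n = psum f (S n).
Proof. induction n.
  - rewrite sum_O. simpl. ring.
  - rewrite sum_Sn, IHn. simpl. reflexivity. Qed.

Lemma nonpos_not0 (z : C) : ~ nonpos_int z -> z <> 0.
Proof. intros H E. apply H. exists 0%nat. rewrite E. simpl. unfold RtoC. f_equal. ring. Qed.

Lemma nonpos_succ (z : C) : ~ nonpos_int z -> ~ nonpos_int (z + 1).
Proof. intros H [n En]. apply H. exists (S n). rewrite S_INR.
  replace z with (z + 1 - 1) by ring. rewrite En. rewrite !RtoC_opp, RtoC_plus. ring. Qed.

Lemma nonpos_eq (z w : C) : z = w -> ~ nonpos_int z -> ~ nonpos_int w.
Proof. intros E. rewrite E. auto. Qed.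


Theorem mainTheorem6 (a b c d : C) :
  (* all terms of the series are defined *)
  (forall k : nat, poch (c + 1) k <> 0) ->
  (forall k : nat, poch d k <> 0) ->
  (* the series converges *)
  ex_series (F32_term a b (d + 2) (c + 1) d 1) ->
  (* all terms of the right-hand side are defined *)
  ~ nonpos_int (c + 1) -> ~ nonpos_int (c - a - b) ->
  ~ nonpos_int (c - a + 1) -> ~ nonpos_int (c - b + 1) ->
  d <> 0 -> d + 1 <> 0 -> c - a - b - 1 <> 0 ->
  is_series (F32_term a b (d + 2) (c + 1) d 1)
    (CGamma (c + 1) * CGamma (c - a - b) / (CGamma (c - a + 1) * CGamma (c - b + 1))
     * ((c - a - b) + 2 * a * b / d
        + a * b * (a + 1) * (b + 1) / (d * (d + 1) * (c - a - b - 1)))).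
Proof.
  intros Hc Hd Hser Hnc1 Hnab Hna Hnb Hd0 Hd1 Hab1.
  set (T := F32_term a b (d + 2) (c + 1) d 1) in *.
  set (u := uu a b c).
  destruct Hser as [s Hs]. change C in s.
  apply cvC_of_is_series in Hs.
  assert (HsT : cvC (psum T) s).
  { apply cvC_shift. apply (cvC_ext (sum_n T)); auto. intros n. apply psum_sum_n. }
  assert (HT0 : cvC T 0).
  { apply (cvC_ext (fun n => psum T (S n) - psum T n)). { intros n. simpl. ring. }
    replace (RtoC 0) with (s - s) by ring. apply cvC_minus; auto. apply cvC_shift'. auto. }
  assert (Hdn : forall n : nat, d + RtoC (INR n) <> 0) by (apply C_not0; auto).
  assert (Hd1n : forall n : nat, d + 1 + RtoC (INR n) <> 0).
  { intros n E. apply (Hdn (S n)). rewrite S_INR, RtoC_plus. rewrite <- E. ring. }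
  assert (Hn2 : cvC (fun n => RtoC (INR n) * RtoC (INR n) * u n) 0).
  { assert (Hl : cvC (fun n => T n * (d * (d + 1)) * (RtoC (INR n) / (d + RtoC (INR n))) * (RtoC (INR n) / (d + 1 + RtoC (INR n))))
       (0 * (d * (d + 1)) * 1 * 1)).
    { apply cvC_mult; [apply cvC_mult; [apply cvC_mult; [auto|apply cvC_const]|]|]; apply cv_n_over; auto. }
    replace (0 * (d * (d + 1)) * 1 * 1) with (RtoC 0) in Hl by ring.
    refine (cvC_ext _ _ _ _ Hl). intros n. unfold T. rewrite F32_eq by auto. fold (uu a b c n). fold u.
    pose proof (Hdn n). pose proof (Hd1n n).
    replace (d + RtoC (INR n) + 1) with (d + 1 + RtoC (INR n)) by ring.
    field. auto. }
  assert (Hn1 : cvC (fun n => RtoC (INR n) * u n) 0).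
  { assert (Hl : cvC (fun n => (RtoC (INR n) * RtoC (INR n) * u n) * / RtoC (INR n)) (0 * 0)).
    { apply cvC_mult; auto. apply cvC_inv_n. }
    replace (0 * 0) with (RtoC 0) in Hl by ring.
    refine (cvC_ext_ev _ _ _ 1 _ Hl). intros n Hn. assert (RtoC (INR n) <> 0) by (apply RtoC_nz, not_0_INR; lia).
    field. auto. }
  assert (HB1 : cvC (fun n => RtoC (INR n) * (c + RtoC (INR n)) * u n) 0).
  { apply (cvC_ext (fun n => RtoC (INR n) * RtoC (INR n) * u n + c * (RtoC (INR n) * u n))). { intros; ring. }
    replace (RtoC 0) with (0 + c * 0) by ring. apply cvC_plus; auto. apply cvC_mult; auto. apply cvC_const. }
  assert (Hcab0 : c - a - b <> 0) by (apply nonpos_not0; auto).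
  assert (HU : cvC (psum u) (Gratio a b (c + 1))).
  { apply gauss; auto.
    - apply (nonpos_eq (c - a - b + 1)); [ring|]. apply nonpos_succ; auto.
    - apply (nonpos_eq (c - a + 1)); [ring|auto].
    - apply (nonpos_eq (c - b + 1)); [ring|auto]. }
  set (G := CGamma (c + 1) * CGamma (c - a - b) / (CGamma (c - a + 1) * CGamma (c - b + 1))).
  assert (EU : Gratio a b (c + 1) = (c - a - b) * G).
  { unfold Gratio, G. replace (c + 1 - a - b) with (c - a - b + 1) by ring.
    replace (c + 1 - a) with (c - a + 1) by ring. replace (c + 1 - b) with (c - b + 1) by ring.
    rewrite (gamma_fe (c - a - b)) by (try apply nonpos_succ; auto).
    destruct (gamma_lim _ Hna) as [G3 _]. destruct (gamma_lim _ Hnb) as [G4 _].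
    field. auto. }
  rewrite EU in HU.
  assert (HV : cvC (psum (fun k => RtoC (INR k) * u k)) (a * b * G)).
  { assert (Hl : cvC (fun n => (a * b * psum u n - RtoC (INR n) * (c + RtoC (INR n)) * u n) * / (c - a - b))
       ((a * b * ((c - a - b) * G) - 0) * / (c - a - b))).
    { apply cvC_mult; [|apply cvC_const]. apply cvC_minus; auto. apply cvC_mult; [apply cvC_const|auto]. }
    replace ((a * b * ((c - a - b) * G) - 0) * / (c - a - b)) with (a * b * G) in Hl by (field; auto).
    refine (cvC_ext _ _ _ _ Hl). intros n. pose proof (ident1 a b c Hc n) as E. fold u in E.
    replace (psum (fun k => RtoC (INR k) * u k) n) with
      (((c - a - b) * psum (fun k => RtoC (INR k) * u k) n) / (c - a - b)) by (field; auto).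
    replace ((c - a - b) * psum (fun k => RtoC (INR k) * u k) n) with
      (a * b * psum u n + - RtoC (INR n) * (c + RtoC (INR n)) * u n) by (rewrite <- E; ring).
    field. auto. }
  set (W := psum (fun k => RtoC (INR k) * (RtoC (INR k) - 1) * u k)).
  set (om := d * (d + 1) * s - d * (d + 1) * ((c - a - b) * G) - (2 * d + 2) * (a * b * G)).
  assert (HW : cvC W om).
  { assert (Hl : cvC (fun n => d * (d + 1) * psum T n - d * (d + 1) * psum u n - (2 * d + 2) * psum (fun k => RtoC (INR k) * u k) n) om).
    { unfold om. apply cvC_minus; [apply cvC_minus|]; apply cvC_mult; auto; apply cvC_const. }
    refine (cvC_ext _ _ _ _ Hl). intros n. pose proof (identT a b c d Hc Hd Hd0 Hd1 n) as E.
    fold T u in E. unfold W. rewrite E. ring. }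
  set (be := (1 + a) * (1 + b) * (a * b * G) - (c - a - b - 1) * om).
  assert (HB : cvC (fun n => (RtoC (INR n) - 1) * RtoC (INR n) * (c + RtoC (INR n)) * u n) be).
  { assert (Hl : cvC (fun n => (1 + a) * (1 + b) * psum (fun k => RtoC (INR k) * u k) n - (c - a - b - 1) * W n) be).
    { unfold be. apply cvC_minus; apply cvC_mult; auto; apply cvC_const. }
    refine (cvC_ext _ _ _ _ Hl). intros n. pose proof (ident2 a b c Hc n) as E. fold u in E.
    unfold W.
    replace ((1 + a) * (1 + b) * psum (fun k => RtoC (INR k) * u k) n -
       (c - a - b - 1) * psum (fun k => RtoC (INR k) * (RtoC (INR k) - 1) * u k) n)
    with (- ((c - a - b - 1) * psum (fun k => RtoC (INR k) * (RtoC (INR k) - 1) * u k) n -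
       (1 + a) * (1 + b) * psum (fun k => RtoC (INR k) * u k) n)) by ring.
    rewrite E. ring. }
  assert (Hbe : be = 0).
  { destruct (Ceq_dec be 0) as [|Hne]; auto. exfalso.
    apply (diverge T (be / (d * (d + 1))) s); auto.
    - apply Cdiv_nz; auto. apply Cmult_neq_0; auto.
    - assert (Hl : cvC (fun n => ((RtoC (INR n) - 1) * RtoC (INR n) * (c + RtoC (INR n)) * u n)
          * ((d + RtoC (INR n)) / (c + RtoC (INR n))) * ((d + 1 + RtoC (INR n)) / (-1 + RtoC (INR n))) * / (d * (d + 1)))
         (be * 1 * 1 * / (d * (d + 1)))).
      { apply cvC_mult; [|apply cvC_const]. apply cvC_mult; [apply cvC_mult; auto|]; apply cv_ratio. }
      replace (be * 1 * 1 * / (d * (d + 1))) with (be / (d * (d + 1))) in Hl by (unfold Cdiv; ring).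
      refine (cvC_ext_ev _ _ _ 2 _ Hl). intros n Hn.
      assert (Hcn : c + RtoC (INR n) <> 0).
      { intro E. apply (C_not0 _ Hc (n - 1)).
        assert (Hn' : INR n = (INR (n - 1) + 1)%R) by (rewrite <- S_INR; f_equal; lia).
        replace (c + 1 + RtoC (INR (n - 1))) with (c + RtoC (INR n)) by (rewrite Hn', RtoC_plus; ring).
        exact E. }
      assert (Hn1' : -1 + RtoC (INR n) <> 0).
      { intro E. assert (INR n = 1)%R. { apply (f_equal Re) in E. simpl in E. lra. }
        assert (2 <= INR n)%R by (apply (le_INR 2); lia). lra. }
      unfold T. rewrite F32_eq by auto. fold (uu a b c n). fold u.
      replace (d + RtoC (INR n) + 1) with (d + 1 + RtoC (INR n)) by ring.
      replace (RtoC (INR n) - 1) with (-1 + RtoC (INR n)) by ring.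
      field. repeat split; auto. }
  assert (Hom : om = (1 + a) * (1 + b) * (a * b * G) / (c - a - b - 1)).
  { unfold be in Hbe.
    replace om with (((c - a - b - 1) * om) / (c - a - b - 1)) by (field; auto).
    replace ((c - a - b - 1) * om) with ((1 + a) * (1 + b) * (a * b * G)).
    - reflexivity.
    - replace ((1 + a) * (1 + b) * (a * b * G)) with
        (((1 + a) * (1 + b) * (a * b * G) - (c - a - b - 1) * om) + (c - a - b - 1) * om) by ring.
      rewrite Hbe. ring. }
  assert (Hs' : s = (om + d * (d + 1) * ((c - a - b) * G) + (2 * d + 2) * (a * b * G)) / (d * (d + 1))).
  { unfold om. field. auto. }
  apply is_series_of_cvC.
  match goal with |- cvC _ ?R => replace R with s end; [exact Hs|].
  rewrite Hs', Hom. field. auto.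
Qed.
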